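(* Let $S^0$ be an adequate semigroup with semilattice of idempotents $E^0$. Let $I=\bigcup_{x\in E^0}L_x$ be a left regular band and $\Lambda=\bigcup_{x\in E^0}R_x$ a right regular band having $E^0$ as a common semilattice transversal. Suppose that for each $x,y\in S^0$ there are mappings $\alpha_{x,y}:R_{x^\ast}\times L_{y^+}\to L_{(xy)^+}$ and $\beta_{x,y}:R_{x^\ast}\times L_{y^+}\to R_{(xy)^\ast}$ satisfying: 1. if $f\in R_{x^\ast}$, $g\in L_{y^+}$, $h\in R_{y^\ast}$, $k\in L_{z^+}$ ($x,y,z\in S^0$) then $(f,g)\alpha_{x,y}\,\big((f,g)\beta_{x,y}h,k\big)\alpha_{xy,z}=\big(f,g\,(h,k)\alpha_{y,z}\big)\alpha_{x,yz}$ and $\big(f,g\,(h,k)\alpha_{y,z}\big)\beta_{x,yz}\,(h,k)\beta_{y,z}=\big((f,g)\beta_{x,y}h,k\big)\beta_{xy,z}$; 2. $(x^\ast,y^+)\alpha_{x,y}=(xy)^+$ and $(x^\ast,y^+)\beta_{x,y}=(xy)^\ast$; 3. if $x,x_1,x_2\in S^0$, $e_1\in L_{x_1^+}$, $f_1\in R_{x_1^\ast}$, $e_2\in L_{x_2^+}$, $f_2\in R_{x_2^\ast}$, $e\in L_{x^+}$ and $e_1(f_1,e)\alpha_{x_1,x}=e_2(f_2,e)\alpha_{x_2,x}$, $x_1x=x_2x$ and $(f_1,e)\beta_{x_1,x}x^\ast=(f_2,e)\beta_{x_2,x}x^\ast$, then $e_1(f_1,e)\alpha_{x_1,x^+}=e_2(f_2,e)\alpha_{x_2,x^+}$,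 $x_1x^+=x_2x^+$ and $(f_1,e)\beta_{x_1,x^+}=(f_2,e)\beta_{x_2,x^+}$; 4. if $x,x_1,x_2\in S^0$, $e_1\in L_{x_1^+}$, $f_1\in R_{x_1^\ast}$, $e_2\in L_{x_2^+}$, $f_2\in R_{x_2^\ast}$, $f\in R_{x^\ast}$ and $x^+(f,e_1)\alpha_{x,x_1}=x^+(f,e_2)\alpha_{x,x_2}$, $xx_1=xx_2$ and $(f,e_1)\beta_{x,x_1}f_1=(f,e_2)\beta_{x,x_2}f_2$, then $(f,e_1)\alpha_{x^\ast,x_1}=(f,e_2)\alpha_{x^\ast,x_2}$, $x^\ast x_1=x^\ast x_2$ and $(f,e_1)\beta_{x^\ast,x_1}f_1=(f,e_2)\beta_{x^\ast,x_2}f_2$. Define on $W=\{(e,x,f)\in I\times S^0\times\Lambda: e\in L_{x^+},\ f\in R_{x^\ast}\}$ the multiplication $(e,x,f)(g,y,h)=\big(e(f,g)\alpha_{x,y},\,xy,\,(f,g)\beta_{x,y}h\big)$. Then $W$ is a quasi-adequate semigroup with an admissible adequate transversal isomorphic to $S^0$. If moreover 5. for all $f\in\Lambda$, $e\in I$: $(f^0,e)\alpha_{f^0,e^0}=f^0e$ and $(f,e^0)\beta_{f^0,e^0}=fe^0$, then $I(W)\cong I$ and $\Lambda(W)\cong\Lambda$. Moreover, every quasi-adequate semigroup with an admissible adequate transversal can be constructed (up to isomorphism) in this way.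
   Context: For a semigroup $S$, $S^1$ is $S$ with an identity adjoined, $E(S)$ its set of idempotents, $\mathcal{L},\mathcal{R}$ Green's relations. $\mathcal{R}^\ast=\{(a,b):\forall x,y\in S^1,\ xa=ya\iff xb=yb\}$ and $\mathcal{L}^\ast=\{(a,b):\forall x,y\in S^1,\ ax=ay\iff bx=by\}$. $S$ is abundant if every $\mathcal{R}^\ast$-class and every $\mathcal{L}^\ast$-class contains an idempotent; an abundant semigroup with commuting idempotents is adequate, and then $a^+$ (resp. $a^\ast$) denotes the unique idempotent $\mathcal{R}^\ast$-related (resp. $\mathcal{L}^\ast$-related) to $a$. An abundant subsemigroup $U$ of an abundant $S$ is a $\ast$-subsemigroup if $\mathcal{L}^\ast(U)=\mathcal{L}^\ast(S)\cap(U\times U)$ and $\mathcal{R}^\ast(U)=\mathcal{R}^\ast(S)\cap(U\times U)$. An adequate $\ast$-subsemigroup $S^0$ of an abundant semigroup $S$ is an adequate transversal if for each $x\in S$ there are a unique $\overline{x}\in S^0$ and idempotents $e,f$ of $S$ with $x=e\overline{x}f$, $e\,\mathcal{L}\,\overline{x}^+$, $f\,\mathcal{R}\,\overline{x}^\ast$; these $e,f$ are unique and written $e_x,f_x$; $I(S)=\{e_x:x\in S\}$, $\Lambda(S)=\{f_x:x\in S\}$ (so $I(W),\Lambda(W)$ refer to $W$ and its transversal). A semigroup is quasi-adequate if it is abundant and its idempotents form a subsemigroup; an adequate transversal of a quasi-adequate semigroup is admissible if $\overline{xy}=\overline{x}\,\overline{y}$ for all $x,y$. A left (right) regular band is a band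 with $xyx=xy$ ($xyx=yx$). $E^0$ is a semilattice transversal of a band $B$ if $E^0$ is a subsemilattice of $B$ and each $e\in B$ has exactly one inverse $e^0$ in $E^0$; ''common'' means $E^0\subseteq I\cap\Lambda$ with this property in both. For $x\in E^0$, $L_x$ is the $\mathcal{L}$-class of $x$ in $I$ and $R_x$ the $\mathcal{R}$-class of $x$ in $\Lambda$. Products such as $g\,(h,k)\alpha_{y,z}$, $e_1(f_1,e)\alpha$ are taken in $I$, and $(f,g)\beta_{x,y}h$, $(f_1,e)\beta x^\ast$ in $\Lambda$. *)

(* Defs.v *)
From Stdlib Require Import ClassicalEpsilon.

Set Implicit Arguments.

(** A "semigroup" is a subset [P] of an ambient type [T] with operation [mul]. *)
Definition allT {T : Type} : T -> Prop := fun _ => True.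

(** Elements of S^1: [None] is the adjoined identity. *)
Definition S1l {T : Type} (mul : T -> T -> T) (u : option T) (a : T) : T :=
  match u with None => a | Some t => mul t a end.
Definition S1r {T : Type} (mul : T -> T -> T) (a : T) (u : option T) : T :=
  match u with None => a | Some t => mul a t end.
Definition inP1 {T : Type} (P : T -> Prop) (u : option T) : Prop :=
  match u with None => True | Some t => P t end.

Definition is_semigroup {T : Type} (P : T -> Prop) (mul : T -> T -> T) : Prop :=
  (forall a b, P a -> P b -> P (mul a b)) /\
  (forall a b c, P a -> P b -> P c -> mul (mul a b) c = mul a (mul b c)).

Definition idem {T : Type} (P : T -> Prop) (mul : T -> T -> T) (e : T) : Prop :=
  P e /\ mul e e = e.

Definition GreenL {T : Type} (P : T -> Prop) (mul : T -> T -> T) (a b : T) : Prop :=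
  P a /\ P b /\ (exists u, inP1 P u /\ a = S1l mul u b)
              /\ (exists v, inP1 P v /\ b = S1l mul v a).
Definition GreenR {T : Type} (P : T -> Prop) (mul : T -> T -> T) (a b : T) : Prop :=
  P a /\ P b /\ (exists u, inP1 P u /\ a = S1r mul b u)
              /\ (exists v, inP1 P v /\ b = S1r mul a v).

Definition Rstar {T : Type} (P : T -> Prop) (mul : T -> T -> T) (a b : T) : Prop :=
  P a /\ P b /\ forall x y, inP1 P x -> inP1 P y ->
    (S1l mul x a = S1l mul y a <-> S1l mul x b = S1l mul y b).
Definition Lstar {T : Type} (P : T -> Prop) (mul : T -> T -> T) (a b : T) : Prop :=
  P a /\ P b /\ forall x y, inP1 P x -> inP1 P y ->
    (S1r mul a x = S1r mul a y <-> S1r mul b x = S1r mul b y).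

Definition abundant {T : Type} (P : T -> Prop) (mul : T -> T -> T) : Prop :=
  forall a, P a ->
    (exists e, idem P mul e /\ Rstar P mul a e) /\
    (exists e, idem P mul e /\ Lstar P mul a e).

Definition adequate {T : Type} (P : T -> Prop) (mul : T -> T -> T) : Prop :=
  abundant P mul /\
  forall e f, idem P mul e -> idem P mul f -> mul e f = mul f e.

Definition quasi_adequate {T : Type} (P : T -> Prop) (mul : T -> T -> T) : Prop :=
  abundant P mul /\
  forall e f, idem P mul e -> idem P mul f -> idem P mul (mul e f).

Definition star_subsemigroup {T : Type} (P U : T -> Prop) (mul : T -> T -> T) : Prop :=
  (forall a, U a -> P a) /\ is_semigroup U mul /\ abundant U mul /\
  (forall a b, U a -> U b -> (Lstar U mul a b <-> Lstar P mul a b)) /\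
  (forall a b, U a -> U b -> (Rstar U mul a b <-> Rstar P mul a b)).

(** [x = e xb f] with [xb] in [U], [e] idempotent L-related to [xb^+] and
    [f] idempotent R-related to [xb^*] (the idempotents of [U] that are
    R*- resp. L*-related to [xb] in [U]). *)
Definition decomp {T : Type} (P U : T -> Prop) (mul : T -> T -> T)
    (x xb e f : T) : Prop :=
  U xb /\ idem P mul e /\ idem P mul f /\ x = mul (mul e xb) f /\
  exists p q, idem U mul p /\ Rstar U mul xb p /\
              idem U mul q /\ Lstar U mul xb q /\
              GreenL P mul e p /\ GreenR P mul f q.

Definition is_bar {T : Type} (P U : T -> Prop) (mul : T -> T -> T) (x xb : T) : Prop :=
  exists e f, decomp P U mul x xb e f.

Definition adequate_transversal {T : Type} (P U : T -> Prop) (mul : T -> T -> T) : Prop :=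
  star_subsemigroup P U mul /\ adequate U mul /\
  forall x, P x -> exists! xb, is_bar P U mul x xb.

Definition admissible {T : Type} (P U : T -> Prop) (mul : T -> T -> T) : Prop :=
  quasi_adequate P mul /\ adequate_transversal P U mul /\
  forall x y xb yb, P x -> P y -> is_bar P U mul x xb -> is_bar P U mul y yb ->
    is_bar P U mul (mul x y) (mul xb yb).

Definition Iset {T : Type} (P U : T -> Prop) (mul : T -> T -> T) (e : T) : Prop :=
  exists x xb f, P x /\ decomp P U mul x xb e f.
Definition Lamset {T : Type} (P U : T -> Prop) (mul : T -> T -> T) (f : T) : Prop :=
  exists x xb e, P x /\ decomp P U mul x xb e f.

Definition iso {T1 T2 : Type} (P1 : T1 -> Prop) (mul1 : T1 -> T1 -> T1)
    (P2 : T2 -> Prop) (mul2 : T2 -> T2 -> T2) : Prop :=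
  is_semigroup P1 mul1 /\ is_semigroup P2 mul2 /\
  exists phi : T1 -> T2,
    (forall a, P1 a -> P2 (phi a)) /\
    (forall a b, P1 a -> P1 b -> phi a = phi b -> a = b) /\
    (forall c, P2 c -> exists a, P1 a /\ phi a = c) /\
    (forall a b, P1 a -> P1 b -> phi (mul1 a b) = mul2 (phi a) (phi b)).

Definition left_regular_band {T : Type} (mul : T -> T -> T) : Prop :=
  is_semigroup allT mul /\ (forall x, mul x x = x) /\
  (forall x y, mul (mul x y) x = mul x y).
Definition right_regular_band {T : Type} (mul : T -> T -> T) : Prop :=
  is_semigroup allT mul /\ (forall x, mul x x = x) /\
  (forall x y, mul (mul x y) x = mul y x).

Definition inverse {T : Type} (mul : T -> T -> T) (a b : T) : Prop :=
  mul (mul a b) a = a /\ mul (mul b a) b = b.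

(** The idempotents E^0 of S0, embedded into the band B via [j], form a
    semilattice transversal of B. *)
Definition sl_transversal {S B : Type} (mulS : S -> S -> S) (mulB : B -> B -> B)
    (j : S -> B) : Prop :=
  (forall e f, idem allT mulS e -> idem allT mulS f -> j (mulS e f) = mulB (j e) (j f)) /\
  (forall e f, idem allT mulS e -> idem allT mulS f -> j e = j f -> e = f) /\
  (forall b, exists! x, idem allT mulS x /\ inverse mulB b (j x)).

(** a^+ and a^* in an adequate semigroup (the unique such idempotents). *)
Definition plusf {T : Type} (mul : T -> T -> T) (a : T) : T :=
  epsilon (inhabits a) (fun e => idem allT mul e /\ Rstar allT mul a e).
Definition starf {T : Type} (mul : T -> T -> T) (a : T) : T :=
  epsilon (inhabits a) (fun e => idem allT mul e /\ Lstar allT mul a e).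

(** e in L_{x^+} (L-class in I), f in R_{x^*} (R-class in Lambda). *)
Definition inLc {S TI : Type} (mulS : S -> S -> S) (mulI : TI -> TI -> TI)
    (jI : S -> TI) (x : S) (e : TI) : Prop :=
  GreenL allT mulI e (jI (plusf mulS x)).
Definition inRc {S TL : Type} (mulS : S -> S -> S) (mulL : TL -> TL -> TL)
    (jL : S -> TL) (x : S) (f : TL) : Prop :=
  GreenR allT mulL f (jL (starf mulS x)).

Section Data.
Context (S0 : Type) (mulS : S0 -> S0 -> S0) (TI : Type) (mulI : TI -> TI -> TI)
        (TL : Type) (mulL : TL -> TL -> TL) (jI : S0 -> TI) (jL : S0 -> TL)
        (alpha : S0 -> S0 -> TL -> TI -> TI) (beta : S0 -> S0 -> TL -> TI -> TL).

Local Notation pl := (plusf mulS).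
Local Notation st := (starf mulS).
Local Notation inL := (inLc mulS mulI jI).
Local Notation inR := (inRc mulS mulL jL).

Definition W_cond1 : Prop :=
  forall x y z f g h k, inR x f -> inL y g -> inR y h -> inL z k ->
    mulI (alpha x y f g) (alpha (mulS x y) z (mulL (beta x y f g) h) k)
      = alpha x (mulS y z) f (mulI g (alpha y z h k)) /\
    mulL (beta x (mulS y z) f (mulI g (alpha y z h k))) (beta y z h k)
      = beta (mulS x y) z (mulL (beta x y f g) h) k.

Definition W_cond2 : Prop :=
  forall x y, alpha x y (jL (st x)) (jI (pl y)) = jI (pl (mulS x y)) /\
              beta x y (jL (st x)) (jI (pl y)) = jL (st (mulS x y)).

Definition W_cond3 : Prop :=
  forall x x1 x2 e1 f1 e2 f2 e,
    inL x1 e1 -> inR x1 f1 -> inL x2 e2 -> inR x2 f2 -> inL x e ->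
    mulI e1 (alpha x1 x f1 e) = mulI e2 (alpha x2 x f2 e) ->
    mulS x1 x = mulS x2 x ->
    mulL (beta x1 x f1 e) (jL (st x)) = mulL (beta x2 x f2 e) (jL (st x)) ->
    mulI e1 (alpha x1 (pl x) f1 e) = mulI e2 (alpha x2 (pl x) f2 e) /\
    mulS x1 (pl x) = mulS x2 (pl x) /\
    beta x1 (pl x) f1 e = beta x2 (pl x) f2 e.

Definition W_cond4 : Prop :=
  forall x x1 x2 e1 f1 e2 f2 f,
    inL x1 e1 -> inR x1 f1 -> inL x2 e2 -> inR x2 f2 -> inR x f ->
    mulI (jI (pl x)) (alpha x x1 f e1) = mulI (jI (pl x)) (alpha x x2 f e2) ->
    mulS x x1 = mulS x x2 ->
    mulL (beta x x1 f e1) f1 = mulL (beta x x2 f e2) f2 ->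
    alpha (st x) x1 f e1 = alpha (st x) x2 f e2 /\
    mulS (st x) x1 = mulS (st x) x2 /\
    mulL (beta (st x) x1 f e1) f1 = mulL (beta (st x) x2 f e2) f2.

(** Condition 5: f^0 (resp. e^0) is the inverse of f in E^0 inside Lambda
    (resp. of e inside I). *)
Definition W_cond5 : Prop :=
  forall (f : TL) (e : TI) (u v : S0),
    idem allT mulS u -> inverse mulL f (jL u) ->
    idem allT mulS v -> inverse mulI e (jI v) ->
    alpha u v (jL u) e = mulI (jI u) e /\
    beta u v f (jI v) = mulL f (jL v).

Definition W_data : Prop :=
  is_semigroup allT mulS /\ adequate allT mulS /\
  left_regular_band mulI /\ right_regular_band mulL /\
  sl_transversal mulS mulI jI /\ sl_transversal mulS mulL jL /\
  (forall e, exists x, idem allT mulS x /\ GreenL allT mulI e (jI x)) /\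
  (forall f, exists x, idem allT mulS x /\ GreenR allT mulL f (jL x)) /\
  (forall x y f g, inR x f -> inL y g ->
     inL (mulS x y) (alpha x y f g) /\ inR (mulS x y) (beta x y f g)) /\
  W_cond1 /\ W_cond2 /\ W_cond3 /\ W_cond4.

Definition Wset (w : TI * S0 * TL) : Prop :=
  let '(e, x, f) := w in inL x e /\ inR x f.

Definition mulW (w1 w2 : TI * S0 * TL) : TI * S0 * TL :=
  let '(e, x, f) := w1 in let '(g, y, h) := w2 in
  (mulI e (alpha x y f g), mulS x y, mulL (beta x y f g) h).

End Data.

(* Main.v *)
Require Import Defs.
From Stdlib Require Import ClassicalEpsilon ProofIrrelevance.
Set Implicit Arguments.

Module Gm.

Set Implicit Arguments.

Section Generic.
Variables (T : Type) (P : T -> Prop) (mul : T -> T -> T).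

Lemma Rstar_refl a : P a -> Rstar P mul a a.
Proof. intros Ha; split; [exact Ha|split;[exact Ha|tauto]]. Qed.
Lemma Lstar_refl a : P a -> Lstar P mul a a.
Proof. intros Ha; split; [exact Ha|split;[exact Ha|tauto]]. Qed.
Lemma Rstar_sym a b : Rstar P mul a b -> Rstar P mul b a.
Proof. intros [Ha [Hb H]]; split; [exact Hb|split;[exact Ha|]]. intros x y Hx Hy; rewrite (H x y Hx Hy); tauto. Qed.
Lemma Lstar_sym a b : Lstar P mul a b -> Lstar P mul b a.
Proof. intros [Ha [Hb H]]; split; [exact Hb|split;[exact Ha|]]. intros x y Hx Hy; rewrite (H x y Hx Hy); tauto. Qed.
Lemma Rstar_trans a b c : Rstar P mul a b -> Rstar P mul b c -> Rstar P mul a c.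
Proof. intros [Ha [Hb H]] [_ [Hc H']]; split; [exact Ha|split;[exact Hc|]].
  intros x y Hx Hy; rewrite (H x y Hx Hy); apply H'; auto. Qed.
Lemma Lstar_trans a b c : Lstar P mul a b -> Lstar P mul b c -> Lstar P mul a c.
Proof. intros [Ha [Hb H]] [_ [Hc H']]; split; [exact Ha|split;[exact Hc|]].
  intros x y Hx Hy; rewrite (H x y Hx Hy); apply H'; auto. Qed.

Lemma Rstar_use a b s t : Rstar P mul a b -> inP1 P s -> inP1 P t ->
  S1l mul s a = S1l mul t a -> S1l mul s b = S1l mul t b.
Proof. intros [_ [_ H]] Hs Ht; apply H; auto. Qed.
Lemma Lstar_use a b s t : Lstar P mul a b -> inP1 P s -> inP1 P t ->
  S1r mul a s = S1r mul a t -> S1r mul b s = S1r mul b t.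
Proof. intros [_ [_ H]] Hs Ht; apply H; auto. Qed.

Lemma Rstar_use2 a b s t : Rstar P mul a b -> P s -> P t -> mul s a = mul t a -> mul s b = mul t b.
Proof. intros H Hs Ht E. exact (Rstar_use (Some s) (Some t) H Hs Ht E). Qed.
Lemma Rstar_use1 a b s : Rstar P mul a b -> P s -> mul s a = a -> mul s b = b.
Proof. intros H Hs E. exact (Rstar_use (Some s) None H Hs I E). Qed.
Lemma Lstar_use2 a b s t : Lstar P mul a b -> P s -> P t -> mul a s = mul a t -> mul b s = mul b t.
Proof. intros H Hs Ht E. exact (Lstar_use (Some s) (Some t) H Hs Ht E). Qed.
Lemma Lstar_use1 a b s : Lstar P mul a b -> P s -> mul a s = a -> mul b s = b.
Proof. intros H Hs E. exact (Lstar_use (Some s) None H Hs I E). Qed.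

Lemma Rstar_idem e f : idem P mul e -> idem P mul f -> Rstar P mul e f ->
  mul e f = f /\ mul f e = e.
Proof. intros [He Hee] [Hf Hff] H; split.
  - apply (Rstar_use1 H He Hee).
  - apply (Rstar_use1 (Rstar_sym H) Hf Hff). Qed.
Lemma Lstar_idem e f : idem P mul e -> idem P mul f -> Lstar P mul e f ->
  mul e f = e /\ mul f e = f.
Proof. intros [He Hee] [Hf Hff] H; split.
  - apply (Lstar_use1 (Lstar_sym H) Hf Hff).
  - apply (Lstar_use1 H He Hee). Qed.

Lemma Rstar_intro a e : P a -> idem P mul e -> mul e a = a ->
  (forall s t, P s -> P t -> (mul s a = mul t a <-> mul s e = mul t e)) ->
  Rstar P mul a e.
Proof. intros Ha [He Hee] Hea H. split; [exact Ha|split;[exact He|]].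
  intros [s|] [t|] Hs Ht; simpl in *.
  - apply H; auto.
  - rewrite <- Hee at 2. rewrite <- Hea at 2. apply H; auto.
  - rewrite <- Hee at 1. rewrite <- Hea at 1. apply H; auto.
  - tauto. Qed.
Lemma Lstar_intro a e : P a -> idem P mul e -> mul a e = a ->
  (forall s t, P s -> P t -> (mul a s = mul a t <-> mul e s = mul e t)) ->
  Lstar P mul a e.
Proof. intros Ha [He Hee] Hea H. split; [exact Ha|split;[exact He|]].
  intros [s|] [t|] Hs Ht; simpl in *.
  - apply H; auto.
  - rewrite <- Hee at 2. rewrite <- Hea at 2. apply H; auto.
  - rewrite <- Hee at 1. rewrite <- Hea at 1. apply H; auto.
  - tauto. Qed.

Hypothesis assoc : forall a b c, P a -> P b -> P c -> mul (mul a b) c = mul a (mul b c).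
Hypothesis closed : forall a b, P a -> P b -> P (mul a b).

Lemma GreenL_elim a b : GreenL P mul a b -> idem P mul a -> idem P mul b ->
  mul a b = a /\ mul b a = b.
Proof. intros [Ha [Hb [[u [Hu E1]] [v [Hv E2]]]]] [_ Haa] [_ Hbb]; split.
  - destruct u as [u|]; simpl in *; subst.
    + rewrite assoc by auto. now rewrite Hbb.
    + exact Hbb.
  - destruct v as [v|]; simpl in *.
    + rewrite E2 at 1 2. rewrite assoc by auto. now rewrite Haa.
    + simpl in E2; rewrite <- E2; exact Hbb. Qed.
Lemma GreenR_elim a b : GreenR P mul a b -> idem P mul a -> idem P mul b ->
  mul b a = a /\ mul a b = b.
Proof. intros [Ha [Hb [[u [Hu E1]] [v [Hv E2]]]]] [_ Haa] [_ Hbb]; split.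
  - destruct u as [u|]; simpl in *; subst.
    + rewrite <- assoc by auto. now rewrite Hbb.
    + exact Hbb.
  - destruct v as [v|]; simpl in *.
    + rewrite E2 at 1 2. rewrite <- assoc by auto. now rewrite Haa.
    + simpl in E2; rewrite <- E2; exact Hbb. Qed.
Lemma GreenL_intro a b : P a -> P b -> mul a b = a -> mul b a = b -> GreenL P mul a b.
Proof. intros Ha Hb E1 E2. split;[auto|split;[auto|split]].
  - exists (Some a); simpl; auto.
  - exists (Some b); simpl; auto. Qed.
Lemma GreenR_intro a b : P a -> P b -> mul b a = a -> mul a b = b -> GreenR P mul a b.
Proof. intros Ha Hb E1 E2. split;[auto|split;[auto|split]].
  - exists (Some a); simpl; auto.
  - exists (Some b); simpl; auto. Qed.

Lemma S1l_assoc s a b : inP1 P s -> P a -> P b -> S1l mul s (mul a b) = mul (S1l mul s a) b.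
Proof. destruct s; simpl; auto. intros; symmetry; apply assoc; auto. Qed.
Lemma S1r_assoc s a b : inP1 P s -> P a -> P b -> S1r mul (mul a b) s = mul a (S1r mul b s).
Proof. destruct s; simpl; auto. Qed.

End Generic.

Lemma sig_eq {A : Type} (Q : A -> Prop) (a b : sig Q) : proj1_sig a = proj1_sig b -> a = b.
Proof. destruct a as [a Ha], b as [b Hb]; simpl; intros ->. f_equal. apply proof_irrelevance. Qed.
Arguments Rstar_use1 [T P mul a b s].
Arguments Lstar_use1 [T P mul a b s].
Arguments Rstar_use2 [T P mul a b s t].
Arguments Lstar_use2 [T P mul a b s t].

Section Transfer.
Variables (A B : Type) (mA : A -> A -> A) (mB : B -> B -> B) (f : B -> A).
Hypothesis hom : forall a b, f (mB a b) = mA (f a) (f b).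

Lemma S1l_proj s b : f (S1l mB s b) = S1l mA (option_map f s) (f b).
Proof. destruct s; simpl; auto. Qed.
Lemma S1r_proj s b : f (S1r mB b s) = S1r mA (f b) (option_map f s).
Proof. destruct s; simpl; auto. Qed.

Lemma GreenL_proj (Q : B -> Prop) a b : GreenL Q mB a b -> GreenL allT mA (f a) (f b).
Proof. intros [_ [_ [[u [_ E1]] [v [_ E2]]]]]. split;[exact I|split;[exact I|split]].
  - exists (option_map f u); split; [destruct u; exact I|]. rewrite E1 at 1; apply S1l_proj.
  - exists (option_map f v); split; [destruct v; exact I|]. rewrite E2 at 1; apply S1l_proj. Qed.
Lemma GreenR_proj (Q : B -> Prop) a b : GreenR Q mB a b -> GreenR allT mA (f a) (f b).
Proof. intros [_ [_ [[u [_ E1]] [v [_ E2]]]]]. split;[exact I|split;[exact I|split]].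
  - exists (option_map f u); split; [destruct u; exact I|]. rewrite E1 at 1; apply S1r_proj.
  - exists (option_map f v); split; [destruct v; exact I|]. rewrite E2 at 1; apply S1r_proj. Qed.
End Transfer.

Section Transfer2.
Variables (A B : Type) (mA : A -> A -> A) (mB : B -> B -> B) (f : A -> B).
Hypothesis hom : forall a b, f (mA a b) = mB (f a) (f b).
Hypothesis inj : forall a b, f a = f b -> a = b.
Definition imQ (b : B) : Prop := exists a, b = f a.

Lemma S1l_hom s a : S1l mB (option_map f s) (f a) = f (S1l mA s a).
Proof. destruct s; simpl; auto. Qed.
Lemma S1r_hom s a : S1r mB (f a) (option_map f s) = f (S1r mA a s).
Proof. destruct s; simpl; auto. Qed.
Lemma inP1_imQ s : inP1 imQ s -> exists s', s = option_map f s'.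
Proof. destruct s as [s|]; simpl. - intros [a ->]; exists (Some a); reflexivity. - intros; exists None; reflexivity. Qed.

Lemma Rstar_transfer a a' : Rstar imQ mB (f a) (f a') <-> Rstar allT mA a a'.
Proof. split.
  - intros [_ [_ H]]. split;[exact I|split;[exact I|]]. intros s t _ _.
    specialize (H (option_map f s) (option_map f t)).
    rewrite !S1l_hom in H. split; intros E.
    + apply inj, H; [destruct s; simpl; eauto; exists a0; auto|destruct t; simpl; eauto; exists a0; auto|congruence].
    + apply inj, H; [destruct s; simpl; eauto; exists a0; auto|destruct t; simpl; eauto; exists a0; auto|congruence].
  - intros [_ [_ H]]. split;[exists a; auto|split;[exists a'; auto|]]. intros s t Hs Ht.
    destruct (inP1_imQ _ Hs) as [s' ->]. destruct (inP1_imQ _ Ht) as [t' ->]. rewrite !S1l_hom.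
    specialize (H s' t' (ltac:(destruct s'; exact I)) (ltac:(destruct t'; exact I))).
    split; intros E; f_equal; apply H; apply inj; auto. Qed.
Lemma Lstar_transfer a a' : Lstar imQ mB (f a) (f a') <-> Lstar allT mA a a'.
Proof. split.
  - intros [_ [_ H]]. split;[exact I|split;[exact I|]]. intros s t _ _.
    specialize (H (option_map f s) (option_map f t)).
    rewrite !S1r_hom in H. split; intros E.
    + apply inj, H; [destruct s; simpl; eauto; exists a0; auto|destruct t; simpl; eauto; exists a0; auto|congruence].
    + apply inj, H; [destruct s; simpl; eauto; exists a0; auto|destruct t; simpl; eauto; exists a0; auto|congruence].
  - intros [_ [_ H]]. split;[exists a; auto|split;[exists a'; auto|]]. intros s t Hs Ht.
    destruct (inP1_imQ _ Hs) as [s' ->]. destruct (inP1_imQ _ Ht) as [t' ->]. rewrite !S1r_hom.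
    specialize (H s' t' (ltac:(destruct s'; exact I)) (ltac:(destruct t'; exact I))).
    split; intros E; f_equal; apply H; apply inj; auto. Qed.
Lemma idem_transfer a : idem imQ mB (f a) <-> mA a a = a.
Proof. split.
  - intros [_ E]. apply inj; rewrite hom; auto.
  - intros E; split; [exists a; auto|rewrite <- hom, E; auto]. Qed.
End Transfer2.

End Gm.
Import Gm.

Module Sm.
Set Implicit Arguments.

Section S0facts.
Variables (S0 : Type) (mulS : S0 -> S0 -> S0).
Hypothesis HS : is_semigroup allT mulS.
Hypothesis HA : adequate allT mulS.
Set Default Proof Using "HS HA".

Local Notation pl := (plusf mulS).
Local Notation st := (starf mulS).

Lemma sassoc a b c : mulS (mulS a b) c = mulS a (mulS b c).
Proof. apply (proj2 HS); exact I. Qed.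

Lemma pl_spec x : idem allT mulS (pl x) /\ Rstar allT mulS x (pl x).
Proof. unfold plusf. apply epsilon_spec. destruct (proj1 HA x I) as [[e He] _]. exists e; exact He. Qed.
Lemma st_spec x : idem allT mulS (st x) /\ Lstar allT mulS x (st x).
Proof. unfold starf. apply epsilon_spec. destruct (proj1 HA x I) as [_ [e He]]. exists e; exact He. Qed.

Lemma idem_comm e f : mulS e e = e -> mulS f f = f -> mulS e f = mulS f e.
Proof. intros; apply (proj2 HA); split; auto; exact I. Qed.

Lemma pl_idem x : mulS (pl x) (pl x) = pl x.
Proof. apply (proj2 (proj1 (pl_spec x))). Qed.
Lemma st_idem x : mulS (st x) (st x) = st x.
Proof. apply (proj2 (proj1 (st_spec x))). Qed.

Lemma pl_left x : mulS (pl x) x = x.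
Proof. destruct (pl_spec x) as [_ H]. apply (Rstar_use1 (Rstar_sym H) I). apply pl_idem. Qed.
Lemma st_right x : mulS x (st x) = x.
Proof. destruct (st_spec x) as [_ H]. apply (Lstar_use1 (Lstar_sym H) I). apply st_idem. Qed.

Lemma pl_uniq x e : mulS e e = e -> Rstar allT mulS x e -> e = pl x.
Proof. intros He H. destruct (pl_spec x) as [Hp Hx].
  assert (Hr : Rstar allT mulS e (pl x)) by (apply Rstar_trans with x; auto; apply Rstar_sym; auto).
  destruct (Rstar_idem (conj I He) Hp Hr) as [E1 E2].
  rewrite <- E2. rewrite idem_comm; auto. apply pl_idem. Qed.
Lemma st_uniq x e : mulS e e = e -> Lstar allT mulS x e -> e = st x.
Proof. intros He H. destruct (st_spec x) as [Hp Hx].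
  assert (Hr : Lstar allT mulS e (st x)) by (apply Lstar_trans with x; auto; apply Lstar_sym; auto).
  destruct (Lstar_idem (conj I He) Hp Hr) as [E1 E2].
  rewrite <- E2. rewrite idem_comm; auto. apply st_idem. Qed.

Lemma pl_of_idem u : mulS u u = u -> pl u = u.
Proof. intros H; symmetry; apply pl_uniq; auto. apply Rstar_refl; exact I. Qed.
Lemma st_of_idem u : mulS u u = u -> st u = u.
Proof. intros H; symmetry; apply st_uniq; auto. apply Lstar_refl; exact I. Qed.

Lemma pl_pl x : pl (pl x) = pl x.
Proof. apply pl_of_idem, pl_idem. Qed.
Lemma st_pl x : st (pl x) = pl x.
Proof. apply st_of_idem, pl_idem. Qed.
Lemma pl_st x : pl (st x) = st x.
Proof. apply pl_of_idem, st_idem. Qed.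
Lemma st_st x : st (st x) = st x.
Proof. apply st_of_idem, st_idem. Qed.

Lemma pl_mul x y : mulS (pl x) (pl (mulS x y)) = pl (mulS x y).
Proof. destruct (pl_spec (mulS x y)) as [_ H]. apply (Rstar_use1 H I).
  rewrite <- sassoc, pl_left; reflexivity. Qed.
Lemma pl_mul' x y : mulS (pl (mulS x y)) (pl x) = pl (mulS x y).
Proof. rewrite idem_comm by (apply pl_idem). apply pl_mul. Qed.
Lemma st_mul x y : mulS (st (mulS x y)) (st y) = st (mulS x y).
Proof. destruct (st_spec (mulS x y)) as [_ H]. apply (Lstar_use1 H I).
  rewrite sassoc, st_right; reflexivity. Qed.
Lemma st_mul' x y : mulS (st y) (st (mulS x y)) = st (mulS x y).
Proof. rewrite idem_comm by (apply st_idem). apply st_mul. Qed.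

Lemma idem_mul u v : mulS u u = u -> mulS v v = v -> mulS (mulS u v) (mulS u v) = mulS u v.
Proof. intros Hu Hv. rewrite sassoc, <- (sassoc v u v), (idem_comm Hv Hu), sassoc, Hv, <- sassoc, Hu; reflexivity. Qed.

Lemma Rstar_pl x y : Rstar allT mulS x y <-> pl x = pl y.
Proof. split.
  - intros H. apply pl_uniq. apply pl_idem. apply Rstar_trans with x. apply Rstar_sym; auto. apply pl_spec.
  - intros E. apply Rstar_trans with (pl x). apply pl_spec. rewrite E. apply Rstar_sym, pl_spec. Qed.
Lemma Lstar_st x y : Lstar allT mulS x y <-> st x = st y.
Proof. split.
  - intros H. apply st_uniq. apply st_idem. apply Lstar_trans with x. apply Lstar_sym; auto. apply st_spec.
  - intros E. apply Lstar_trans with (st x). apply st_spec. rewrite E. apply Lstar_sym, st_spec. Qed.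

End S0facts.

End Sm.
Import Sm.

Module Am.
Set Implicit Arguments.

Section WA.
Variables (S0 : Type) (mulS : S0 -> S0 -> S0) (TI : Type) (mulI : TI -> TI -> TI)
        (TL : Type) (mulL : TL -> TL -> TL) (jI : S0 -> TI) (jL : S0 -> TL)
        (alpha : S0 -> S0 -> TL -> TI -> TI) (beta : S0 -> S0 -> TL -> TI -> TL).
Hypothesis HS : is_semigroup allT mulS.
Hypothesis HA : adequate allT mulS.
Hypothesis HI : left_regular_band mulI.
Hypothesis HL : right_regular_band mulL.
Hypothesis HslI : sl_transversal mulS mulI jI.
Hypothesis HslL : sl_transversal mulS mulL jL.
Hypothesis Hrange : forall x y f g, inRc mulS mulL jL x f -> inLc mulS mulI jI y g ->
     inLc mulS mulI jI (mulS x y) (alpha x y f g) /\ inRc mulS mulL jL (mulS x y) (beta x y f g).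
Hypothesis H1 : W_cond1 mulS mulI mulL jI jL alpha beta.
Hypothesis H2 : W_cond2 mulS jI jL alpha beta.

Local Notation pl := (plusf mulS).
Local Notation st := (starf mulS).
Local Notation inL := (inLc mulS mulI jI).
Local Notation inR := (inRc mulS mulL jL).
Local Notation mW := (mulW mulS mulI mulL alpha beta).
Local Notation WS := (Wset mulS mulI mulL jI jL).

Lemma Ia a b c : mulI (mulI a b) c = mulI a (mulI b c).
Proof. destruct HI as [[_ H] _]; apply H; exact I. Qed.
Lemma Iid a : mulI a a = a.
Proof. destruct HI as [_ [H _]]; apply H. Qed.
Lemma La a b c : mulL (mulL a b) c = mulL a (mulL b c).
Proof. destruct HL as [[_ H] _]; apply H; exact I. Qed.
Lemma Lid a : mulL a a = a.
Proof. destruct HL as [_ [H _]]; apply H. Qed.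

Lemma Lzero e p g : mulI e p = e -> mulI p g = p -> mulI e g = e.
Proof. intros E1 E2. rewrite <- E1 at 1. rewrite Ia, E2. exact E1. Qed.
Lemma Rzero f q h : mulL q h = h -> mulL f q = q -> mulL f h = h.
Proof. intros E1 E2. rewrite <- E1 at 1. rewrite <- La, E2. exact E1. Qed.

Lemma jI_hom u v : mulS u u = u -> mulS v v = v -> jI (mulS u v) = mulI (jI u) (jI v).
Proof. intros; apply (proj1 HslI); split; auto; exact I. Qed.
Lemma jL_hom u v : mulS u u = u -> mulS v v = v -> jL (mulS u v) = mulL (jL u) (jL v).
Proof. intros; apply (proj1 HslL); split; auto; exact I. Qed.
Lemma jI_inj u v : mulS u u = u -> mulS v v = v -> jI u = jI v -> u = v.
Proof. intros; apply (proj1 (proj2 HslI)); try split; auto; exact I. Qed.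
Lemma jL_inj u v : mulS u u = u -> mulS v v = v -> jL u = jL v -> u = v.
Proof. intros; apply (proj1 (proj2 HslL)); try split; auto; exact I. Qed.

Lemma GL_iff e p : GreenL allT mulI e p <-> mulI e p = e /\ mulI p e = p.
Proof. split.
  - intros H; apply (GreenL_elim (P:=allT)); auto.
    + intros; apply Ia. + split; [exact I|apply Iid]. + split; [exact I|apply Iid].
  - intros [E1 E2]; apply GreenL_intro; auto; exact I. Qed.
Lemma GR_iff f q : GreenR allT mulL f q <-> mulL q f = f /\ mulL f q = q.
Proof. split.
  - intros H; apply (GreenR_elim (P:=allT)); auto.
    + intros; apply La. + split; [exact I|apply Lid]. + split; [exact I|apply Lid].
  - intros [E1 E2]; apply GreenR_intro; auto; exact I. Qed.

Lemma inL_iff x e : inL x e <-> mulI e (jI (pl x)) = e /\ mulI (jI (pl x)) e = jI (pl x).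
Proof. apply GL_iff. Qed.
Lemma inR_iff x f : inR x f <-> mulL (jL (st x)) f = f /\ mulL f (jL (st x)) = jL (st x).
Proof. apply GR_iff. Qed.

Lemma inL_refl x : inL x (jI (pl x)).
Proof. apply inL_iff; split; apply Iid. Qed.
Lemma inR_refl x : inR x (jL (st x)).
Proof. apply inR_iff; split; apply Lid. Qed.

Lemma jIpl_mul x y : mulI (jI (pl (mulS x y))) (jI (pl x)) = jI (pl (mulS x y)).
Proof. rewrite <- jI_hom by (apply pl_idem; auto). rewrite pl_mul'; auto. Qed.
Lemma jLst_mul x y : mulL (jL (st y)) (jL (st (mulS x y))) = jL (st (mulS x y)).
Proof. rewrite <- jL_hom by (apply st_idem; auto). rewrite st_mul'; auto. Qed.

Lemma mW_eq e x f g y h : mW (e,x,f) (g,y,h) =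
  (mulI e (alpha x y f g), mulS x y, mulL (beta x y f g) h).
Proof. reflexivity. Qed.
Lemma WS_iff e x f : WS (e,x,f) <-> inL x e /\ inR x f.
Proof. reflexivity. Qed.

Lemma WS_closed a b : WS a -> WS b -> WS (mW a b).
Proof. destruct a as [[e x] f], b as [[g y] h]. rewrite mW_eq, !WS_iff.
  intros [Hxe Hxf] [Hyg Hyh]. destruct (Hrange Hxf Hyg) as [Ha Hb].
  apply inL_iff in Ha, Hxe. apply inR_iff in Hb, Hyh. split.
  - apply inL_iff. split.
    + rewrite Ia, (proj1 Ha); reflexivity.
    + rewrite <- Ia.
      assert (Pe : mulI (jI (pl (mulS x y))) e = jI (pl (mulS x y))).
      { rewrite <- (jIpl_mul x y) at 1. rewrite Ia, (proj2 Hxe), jIpl_mul; reflexivity. }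
      rewrite Pe. apply Ha.
  - apply inR_iff. split.
    + rewrite <- La, (proj1 Hb); reflexivity.
    + rewrite La.
      assert (hQ : mulL h (jL (st (mulS x y))) = jL (st (mulS x y))).
      { rewrite <- (jLst_mul x y) at 1. rewrite <- La, (proj2 Hyh), jLst_mul; reflexivity. }
      rewrite hQ. apply Hb. Qed.

Lemma WS_assoc a b c : WS a -> WS b -> WS c -> mW (mW a b) c = mW a (mW b c).
Proof. destruct a as [[e x] f], b as [[g y] h], c as [[k z] l]. rewrite !mW_eq, !WS_iff.
  intros [Hxe Hxf] [Hyg Hyh] [Hzk Hzl].
  destruct (H1 Hxf Hyg Hyh Hzk) as [E1 E2].
  rewrite Ia, E1, <- La, <- E2, (sassoc HS HA). reflexivity. Qed.

Lemma mW_idem e x f : WS (e,x,f) -> mulS x x = x -> mW (e,x,f) (e,x,f) = (e,x,f).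
Proof. rewrite WS_iff; intros [He Hf] Hx. rewrite mW_eq. destruct (Hrange Hf He) as [Ha Hb].
  rewrite Hx in Ha, Hb. apply inL_iff in Ha, He. apply inR_iff in Hb, Hf. rewrite Hx. f_equal; [f_equal|].
  - apply Lzero with (jI (pl x)); [apply He|apply Ha].
  - apply Rzero with (jL (st x)); [apply Hf|apply Hb]. Qed.

Lemma idemW_mid w : idem WS mW w -> mulS (snd (fst w)) (snd (fst w)) = snd (fst w).
Proof. destruct w as [[e x] f]; intros [_ H]; rewrite mW_eq in H; simpl. congruence. Qed.

Lemma idemW_iff e x f : idem WS mW (e,x,f) <-> WS (e,x,f) /\ mulS x x = x.
Proof. split.
  - intros H; split; [apply H|apply (idemW_mid H)].
  - intros [H Hx]; split; auto; apply mW_idem; auto. Qed.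

Lemma WS_idem_mul a b : idem WS mW a -> idem WS mW b -> idem WS mW (mW a b).
Proof. intros Ha Hb. destruct a as [[e x] f], b as [[g y] h].
  pose proof (idemW_mid Ha) as Hx; pose proof (idemW_mid Hb) as Hy; simpl in *.
  assert (Hc : WS (mW (e,x,f) (g,y,h))) by (apply WS_closed; [apply Ha|apply Hb]).
  destruct (mW (e,x,f) (g,y,h)) as [[p q] r] eqn:Ew.
  rewrite mW_eq in Ew. injection Ew as E1 E2 E3.
  subst p q r.
  apply idemW_iff; split; [exact Hc|]. apply idem_mul; auto. Qed.


Hypothesis H3 : W_cond3 mulS mulI mulL jI jL alpha beta.
Hypothesis H4 : W_cond4 mulS mulI mulL jI jL alpha beta.

Definition wplus (w : TI * S0 * TL) : TI * S0 * TL :=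
  let '(e, x, f) := w in (e, pl x, jL (st (pl x))).
Definition wstar (w : TI * S0 * TL) : TI * S0 * TL :=
  let '(e, x, f) := w in (jI (pl (st x)), st x, f).

Lemma WS_wplus w : WS w -> WS (wplus w).
Proof. destruct w as [[e x] f]; simpl; intros [He _]; split.
  - apply inL_iff; apply inL_iff in He. rewrite (pl_pl HS HA); exact He.
  - apply inR_refl. Qed.
Lemma WS_wstar w : WS w -> WS (wstar w).
Proof. destruct w as [[e x] f]; simpl; intros [_ Hf]; split.
  - apply inL_refl.
  - apply inR_iff; apply inR_iff in Hf. rewrite (st_st HS HA); exact Hf. Qed.
Lemma idem_wplus w : WS w -> idem WS mW (wplus w).
Proof. intros H; pose proof (WS_wplus _ H) as H'. destruct w as [[e x] f]; simpl in *.
  apply idemW_iff; split; auto. apply pl_idem; auto. Qed.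
Lemma idem_wstar w : WS w -> idem WS mW (wstar w).
Proof. intros H; pose proof (WS_wstar _ H) as H'. destruct w as [[e x] f]; simpl in *.
  apply idemW_iff; split; auto. apply st_idem; auto. Qed.

Lemma wplus_left w : WS w -> mW (wplus w) w = w.
Proof. destruct w as [[e x] f]; unfold wplus, wstar; rewrite mW_eq; intros [He Hf].
  destruct (Hrange (inR_refl (pl x)) He) as [Ha Hb]. rewrite (pl_left HS HA) in Ha, Hb |- *.
  apply inL_iff in Ha, He. apply inR_iff in Hb, Hf. f_equal; [f_equal|].
  - apply Lzero with (jI (pl x)); [apply He|apply Ha].
  - apply Rzero with (jL (st x)); [apply Hf|apply Hb]. Qed.
Lemma wstar_right w : WS w -> mW w (wstar w) = w.
Proof. destruct w as [[e x] f]; unfold wplus, wstar; rewrite mW_eq; intros [He Hf].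
  destruct (Hrange Hf (inL_refl (st x))) as [Ha Hb]. rewrite (st_right HS HA) in Ha, Hb |- *.
  apply inL_iff in Ha, He. apply inR_iff in Hb, Hf. f_equal; [f_equal|].
  - apply Lzero with (jI (pl x)); [apply He|apply Ha].
  - apply Rzero with (jL (st x)); [apply Hf|apply Hb]. Qed.

Lemma Rstar_wplus w : WS w -> Rstar WS mW w (wplus w).
Proof. intros Hw. apply Rstar_intro; auto. apply idem_wplus; auto. apply wplus_left; auto.
  intros s t Hs Ht; split.
  - destruct w as [[e x] f], s as [[e1 x1] f1], t as [[e2 x2] f2]; unfold wplus, wstar in *.
    rewrite !mW_eq. intros E. injection E as Ea Eb Ec.
    destruct Hw as [He Hf]. destruct Hs as [He1 Hf1]. destruct Ht as [He2 Hf2].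
    assert (Ec' : mulL (beta x1 x f1 e) (jL (st x)) = mulL (beta x2 x f2 e) (jL (st x))).
    { apply inR_iff in Hf. rewrite <- (proj2 Hf), <- !La, Ec; reflexivity. }
    unfold W_cond3 in H3.
    destruct (H3 He1 Hf1 He2 Hf2 He Ea Eb Ec') as [Fa [Fb Fc]].
    rewrite Fa, Fb, Fc; reflexivity.
  - intros E. rewrite <- (wplus_left _ Hw). rewrite <- !WS_assoc; auto.
    + rewrite E; reflexivity.
    + apply WS_wplus; auto.
    + apply WS_wplus; auto. Qed.

Lemma Lstar_wstar w : WS w -> Lstar WS mW w (wstar w).
Proof. intros Hw. apply Lstar_intro; auto. apply idem_wstar; auto. apply wstar_right; auto.
  intros s t Hs Ht; split.
  - destruct w as [[e x] f], s as [[e1 x1] f1], t as [[e2 x2] f2]; unfold wplus, wstar in *.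
    rewrite !mW_eq. intros E. injection E as Ea Eb Ec.
    destruct Hw as [He Hf]. destruct Hs as [He1 Hf1]. destruct Ht as [He2 Hf2].
    assert (Ea' : mulI (jI (pl x)) (alpha x x1 f e1) = mulI (jI (pl x)) (alpha x x2 f e2)).
    { apply inL_iff in He. rewrite <- (proj2 He), !Ia, Ea; reflexivity. }
    unfold W_cond4 in H4.
    destruct (H4 He1 Hf1 He2 Hf2 Hf Ea' Eb Ec) as [Fa [Fb Fc]].
    rewrite (pl_st HS HA), Fa, Fb, Fc; reflexivity.
  - intros E. rewrite <- (wstar_right _ Hw). rewrite !WS_assoc; auto.
    + rewrite E; reflexivity.
    + apply WS_wstar; auto.
    + apply WS_wstar; auto. Qed.

Lemma W_abundant : abundant WS mW.
Proof. intros a Ha; split.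
  - exists (wplus a); split; [apply idem_wplus|apply Rstar_wplus]; auto.
  - exists (wstar a); split; [apply idem_wstar|apply Lstar_wstar]; auto. Qed.

Lemma W_semigroup : is_semigroup WS mW.
Proof. split; [apply WS_closed|apply WS_assoc]. Qed.

Lemma W_quasi : quasi_adequate WS mW.
Proof. split; [apply W_abundant|apply WS_idem_mul]. Qed.


Definition iota (x : S0) : TI * S0 * TL := (jI (pl x), x, jL (st x)).
Definition mid (w : TI * S0 * TL) : S0 := snd (fst w).
Local Notation UW := (imQ iota).

Lemma WS_iota x : WS (iota x).
Proof. split; [apply inL_refl|apply inR_refl]. Qed.

Lemma jIpl_mul2 x y : mulI (jI (pl x)) (jI (pl (mulS x y))) = jI (pl (mulS x y)).
Proof. rewrite <- jI_hom by (apply pl_idem; auto). rewrite pl_mul; auto. Qed.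
Lemma jLst_mul2 x y : mulL (jL (st (mulS x y))) (jL (st y)) = jL (st (mulS x y)).
Proof. rewrite <- jL_hom by (apply st_idem; auto). rewrite st_mul; auto. Qed.

Lemma H2a x y : alpha x y (jL (st x)) (jI (pl y)) = jI (pl (mulS x y)).
Proof. apply (H2 x y). Qed.
Lemma H2b x y : beta x y (jL (st x)) (jI (pl y)) = jL (st (mulS x y)).
Proof. apply (H2 x y). Qed.

Lemma iota_mul x y : mW (iota x) (iota y) = iota (mulS x y).
Proof. unfold iota; rewrite mW_eq, H2a, H2b, jIpl_mul2, jLst_mul2; reflexivity. Qed.
Lemma iota_inj x y : iota x = iota y -> x = y.
Proof. unfold iota; intros E; injection E; auto. Qed.
Lemma mid_mW a b : mid (mW a b) = mulS (mid a) (mid b).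
Proof. destruct a as [[e x] f], b as [[g y] h]; reflexivity. Qed.
Lemma mid_iota x : mid (iota x) = x.
Proof. reflexivity. Qed.
Lemma U_sub w : UW w -> WS w.
Proof. intros [x ->]; apply WS_iota. Qed.

Lemma rect m e c e' c' : mulS m m = m -> WS (e,m,c) -> WS (e',m,c') ->
  mW (e,m,c) (e',m,c') = (e,m,c').
Proof. intros Hm [He Hc] [He' Hc']. rewrite mW_eq. destruct (Hrange Hc He') as [Ha Hb].
  rewrite Hm in Ha, Hb |- *. apply inL_iff in Ha, He. apply inR_iff in Hb, Hc'. f_equal; [f_equal|].
  - apply Lzero with (jI (pl m)); [apply He|apply Ha].
  - apply Rzero with (jL (st m)); [apply Hc'|apply Hb]. Qed.


Lemma Rstar_iotaW x y : Rstar WS mW (iota x) (iota y) <-> Rstar allT mulS x y.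
Proof. rewrite (Rstar_pl HS HA). split.
  - intros H. assert (H' : Rstar WS mW (iota (pl x)) (iota (pl y))).
    { pose proof (Rstar_wplus _ (WS_iota x)) as Hx. pose proof (Rstar_wplus _ (WS_iota y)) as Hy.
      unfold iota at 1 in Hx. unfold iota at 1 in Hy. unfold wplus in Hx, Hy.
      unfold iota. rewrite !(pl_pl HS HA).
      apply Rstar_trans with (iota x); [apply Rstar_sym; exact Hx|].
      apply Rstar_trans with (iota y); [exact H|exact Hy]. }
    apply Rstar_idem in H'; try (apply idemW_iff; split; [apply WS_iota|apply pl_idem; auto]).
    destruct H' as [E1 E2]. rewrite !iota_mul in E1, E2. apply iota_inj in E1, E2.
    rewrite <- E2, (idem_comm HS HA) by (apply pl_idem; auto). exact E1.
  - intros E. apply Rstar_trans with (wplus (iota x)); [apply Rstar_wplus, WS_iota|].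
    replace (wplus (iota x)) with (wplus (iota y)) by (unfold iota, wplus; rewrite E; reflexivity).
    apply Rstar_sym, Rstar_wplus, WS_iota. Qed.
Lemma Lstar_iotaW x y : Lstar WS mW (iota x) (iota y) <-> Lstar allT mulS x y.
Proof. rewrite (Lstar_st HS HA). split.
  - intros H. assert (H' : Lstar WS mW (iota (st x)) (iota (st y))).
    { pose proof (Lstar_wstar _ (WS_iota x)) as Hx. pose proof (Lstar_wstar _ (WS_iota y)) as Hy.
      unfold iota at 1 in Hx. unfold iota at 1 in Hy. unfold wstar in Hx, Hy.
      unfold iota. rewrite !(st_st HS HA).
      apply Lstar_trans with (iota x); [apply Lstar_sym; exact Hx|].
      apply Lstar_trans with (iota y); [exact H|exact Hy]. }
    apply Lstar_idem in H'; try (apply idemW_iff; split; [apply WS_iota|apply st_idem; auto]).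
    destruct H' as [E1 E2]. rewrite !iota_mul in E1, E2. apply iota_inj in E1, E2.
    rewrite <- E1, (idem_comm HS HA) by (apply st_idem; auto). exact E2.
  - intros E. apply Lstar_trans with (wstar (iota x)); [apply Lstar_wstar, WS_iota|].
    replace (wstar (iota x)) with (wstar (iota y)) by (unfold iota, wstar; rewrite E; reflexivity).
    apply Lstar_sym, Lstar_wstar, WS_iota. Qed.

Lemma iota_hom a b : iota (mulS a b) = mW (iota a) (iota b).
Proof. symmetry; apply iota_mul. Qed.

Lemma Rstar_iotaU x y : Rstar UW mW (iota x) (iota y) <-> Rstar allT mulS x y.
Proof. apply Rstar_transfer; [apply iota_hom|apply iota_inj]. Qed.
Lemma Lstar_iotaU x y : Lstar UW mW (iota x) (iota y) <-> Lstar allT mulS x y.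
Proof. apply Lstar_transfer; [apply iota_hom|apply iota_inj]. Qed.
Lemma idem_iotaU x : idem UW mW (iota x) <-> mulS x x = x.
Proof. apply idem_transfer; [apply iota_hom|apply iota_inj]. Qed.


Lemma wplus_iota_mul e x f : WS (e,x,f) ->
  mW (mW (wplus (e,x,f)) (iota x)) (wstar (e,x,f)) = (e,x,f).
Proof. intros [He Hf]. unfold wplus, wstar, iota. rewrite mW_eq, H2a, H2b, (pl_left HS HA), Lid.
  rewrite mW_eq, H2a, H2b, (st_right HS HA).
  apply inL_iff in He. apply inR_iff in Hf. rewrite !(proj1 He), (proj1 Hf). reflexivity. Qed.

Lemma decomp_ex w : WS w -> decomp WS UW mW w (iota (mid w)) (wplus w) (wstar w).
Proof. intros Hw. destruct w as [[e x] f]. change (mid (e,x,f)) with x.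
  split; [exists x; reflexivity|].
  split; [apply idem_wplus; auto|]. split; [apply idem_wstar; auto|].
  split; [symmetry; apply wplus_iota_mul; auto|].
  exists (iota (pl x)), (iota (st x)).
  split; [apply idem_iotaU, pl_idem; auto|].
  split; [apply Rstar_iotaU, pl_spec; auto|].
  split; [apply idem_iotaU, st_idem; auto|].
  split; [apply Lstar_iotaU, st_spec; auto|].
  pose proof (WS_wplus _ Hw) as Hp. pose proof (WS_wstar _ Hw) as Hs. unfold wplus, wstar in *.
  split.
  - apply GreenL_intro; [exact Hp|apply WS_iota| |].
    + unfold iota. rewrite rect; auto. apply pl_idem; auto. apply WS_iota.
    + unfold iota. rewrite rect; auto. apply pl_idem; auto. apply WS_iota.
  - apply GreenR_intro; [exact Hs|apply WS_iota| |].
    + unfold iota. rewrite rect; auto. apply st_idem; auto. apply WS_iota.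
    + unfold iota. rewrite rect; auto. apply st_idem; auto. apply WS_iota. Qed.

Lemma is_bar_iff w xb : WS w -> (is_bar WS UW mW w xb <-> xb = iota (mid w)).
Proof. intros Hw; split.
  - intros [E [F [[y ->] [HE [HF [Ew [p [q [Hp [Hpr [Hq [Hql [HEL HFR]]]]]]]]]]]]].
    destruct Hp as [[p' Ep] Hp2]. subst p. destruct Hq as [[q' Eq] Hq2]. subst q.
    assert (Hp' : mulS p' p' = p') by (apply idem_iotaU; split; [exists p'; auto|auto]).
    assert (Hq' : mulS q' q' = q') by (apply idem_iotaU; split; [exists q'; auto|auto]).
    apply Rstar_iotaU in Hpr. apply Lstar_iotaU in Hql.
    apply (pl_uniq HS HA) in Hpr; auto. apply (st_uniq HS HA) in Hql; auto.
    apply (@GreenL_proj _ _ mulS _ mid mid_mW) in HEL. apply (@GreenR_proj _ _ mulS _ mid mid_mW) in HFR.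
    pose proof (idemW_mid HE) as HE'. pose proof (idemW_mid HF) as HF'.
    fold (mid E) in HE'. fold (mid F) in HF'.
    apply (GreenL_elim (P:=allT)) in HEL; [|intros; apply (sassoc HS HA)|split; [exact I|exact HE']|split; [exact I|]].
    2: { rewrite mid_iota; auto. }
    apply (GreenR_elim (P:=allT)) in HFR; [|intros; apply (sassoc HS HA)|split; [exact I|exact HF']|split; [exact I|]].
    2: { rewrite mid_iota; auto. }
    rewrite mid_iota in HEL, HFR.
    assert (E1 : mid E = p').
    { rewrite <- (proj1 HEL). rewrite (idem_comm HS HA) by auto. apply HEL. }
    assert (E2 : mid F = q').
    { rewrite <- (proj2 HFR). rewrite (idem_comm HS HA) by auto. symmetry; apply HFR. }
    f_equal. rewrite Ew, !mid_mW, E1, E2, mid_iota, Hpr, Hql, (pl_left HS HA), (st_right HS HA). reflexivity.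
  - intros ->. exists (wplus w), (wstar w). apply decomp_ex; auto. Qed.

Lemma U_semigroup : is_semigroup UW mW.
Proof. split.
  - intros a b [x ->] [y ->]. exists (mulS x y). apply iota_mul.
  - intros a b c Ha Hb Hc. apply WS_assoc; apply U_sub; auto. Qed.

Lemma U_abundant : abundant UW mW.
Proof. intros a [x ->]. split.
  - exists (iota (pl x)). split; [apply idem_iotaU, pl_idem; auto|apply Rstar_iotaU, pl_spec; auto].
  - exists (iota (st x)). split; [apply idem_iotaU, st_idem; auto|apply Lstar_iotaU, st_spec; auto]. Qed.

Lemma U_adequate : adequate UW mW.
Proof. split; [apply U_abundant|]. intros a b Ha Hb.
  destruct (proj1 Ha) as [x Ex]. destruct (proj1 Hb) as [y Ey]. subst a b.
  apply idem_iotaU in Ha. apply idem_iotaU in Hb. rewrite !iota_mul, (idem_comm HS HA); auto. Qed.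

Lemma W_transversal : adequate_transversal WS UW mW.
Proof. split; [|split; [apply U_adequate|]].
  - split; [apply U_sub|]. split; [apply U_semigroup|]. split; [apply U_abundant|]. split.
    + intros a b [x ->] [y ->]. rewrite Lstar_iotaU, Lstar_iotaW; tauto.
    + intros a b [x ->] [y ->]. rewrite Rstar_iotaU, Rstar_iotaW; tauto.
  - intros w Hw. exists (iota (mid w)). split.
    + apply is_bar_iff; auto.
    + intros xb H. symmetry; apply is_bar_iff; auto. Qed.

Lemma W_admissible : admissible WS UW mW.
Proof. split; [apply W_quasi|]. split; [apply W_transversal|].
  intros x y xb yb Hx Hy Bx By. apply is_bar_iff in Bx; auto. apply is_bar_iff in By; auto. subst.
  apply is_bar_iff; [apply WS_closed; auto|]. rewrite iota_mul, mid_mW; reflexivity. Qed.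

Lemma U_iso : iso UW mW allT mulS.
Proof. split; [apply U_semigroup|]. split; [exact HS|]. exists mid. split; [intros; exact I|].
  split; [intros a b [x ->] [y ->]; rewrite !mid_iota; intros ->; reflexivity|].
  split; [intros c _; exists (iota c); split; [exists c; auto|reflexivity]|].
  intros; apply mid_mW. Qed.


Lemma decomp_mids w xb E F : decomp WS UW mW w xb E F ->
  exists y, xb = iota y /\ mid E = pl y /\ mid F = st y /\
    GreenL WS mW E (iota (pl y)) /\ GreenR WS mW F (iota (st y)).
Proof.
    intros [[y ->] [HE [HF [Ew [p [q [Hp [Hpr [Hq [Hql [HEL HFR]]]]]]]]]]].
    destruct Hp as [[p' Ep] Hp2]. subst p. destruct Hq as [[q' Eq] Hq2]. subst q.
    assert (Hp' : mulS p' p' = p') by (apply idem_iotaU; split; [exists p'; auto|auto]).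
    assert (Hq' : mulS q' q' = q') by (apply idem_iotaU; split; [exists q'; auto|auto]).
    apply Rstar_iotaU in Hpr. apply Lstar_iotaU in Hql.
    apply (pl_uniq HS HA) in Hpr; auto. apply (st_uniq HS HA) in Hql; auto.
    subst p' q'. exists y. split; [reflexivity|]. split; [|split; [|split; auto]].
    - apply (@GreenL_proj _ _ mulS _ mid mid_mW) in HEL.
      pose proof (idemW_mid HE) as HE'. fold (mid E) in HE'.
      apply (GreenL_elim (P:=allT)) in HEL; [|intros; apply (sassoc HS HA)|split; [exact I|exact HE']|split; [exact I|]].
      2: { rewrite mid_iota; auto. }
      rewrite mid_iota in HEL.
      rewrite <- (proj1 HEL). rewrite (idem_comm HS HA) by auto. apply HEL.
    - apply (@GreenR_proj _ _ mulS _ mid mid_mW) in HFR.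
      pose proof (idemW_mid HF) as HF'. fold (mid F) in HF'.
      apply (GreenR_elim (P:=allT)) in HFR; [|intros; apply (sassoc HS HA)|split; [exact I|exact HF']|split; [exact I|]].
      2: { rewrite mid_iota; auto. }
      rewrite mid_iota in HFR.
      rewrite <- (proj2 HFR). rewrite (idem_comm HS HA) by auto. symmetry; apply HFR. Qed.

Lemma Iset_char E : Iset WS UW mW E <-> exists g a, E = (g, a, jL a) /\ mulS a a = a /\ inL a g.
Proof. split.
  - intros [w [xb [F [Hw Hd]]]]. pose proof Hd as Hd'.
    destruct Hd' as [_ [HE _]].
    destruct (decomp_mids Hd) as [y [_ [HmE [_ [HEL _]]]]].
    destruct E as [[g a] c]. unfold mid in HmE; simpl in HmE. subst a.
    exists g, (pl y). pose proof (pl_idem HS HA y) as Hu.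
    split; [|split; [exact Hu|apply (proj1 HE)]].
    destruct HEL as [_ [_ [[u [Hu1 Eu]] _]]].
    destruct u as [s|]; simpl in Eu.
    + destruct s as [[s1 s2] s3]. unfold iota in Eu. rewrite mW_eq in Eu.
      injection Eu as Ea Eb Ec. destruct Hu1 as [Hs1 Hs3].
      destruct (Hrange Hs3 (inL_refl (pl y))) as [_ Hb]. rewrite <- Eb in Hb.
      apply inR_iff in Hb. rewrite Ec, (proj2 Hb), (st_pl HS HA). reflexivity.
    + unfold iota in Eu. injection Eu as Ea Ec. rewrite Ec, (st_pl HS HA). reflexivity.
  - intros [g [a [-> [Ha Hg]]]].
    assert (Hw : WS (g, a, jL a)).
    { split; auto. apply inR_iff. rewrite (st_of_idem HS HA) by auto. split; apply Lid. }
    exists (g, a, jL a), (iota (mid (g,a,jL a))), (wstar (g, a, jL a)). split; auto.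
    pose proof (decomp_ex _ Hw) as D.
    replace (wplus (g,a,jL a)) with (g, a, jL a) in D; auto.
    unfold wplus. rewrite (pl_of_idem HS HA), (st_of_idem HS HA); auto. Qed.

Lemma Lamset_char F : Lamset WS UW mW F <-> exists h a, F = (jI a, a, h) /\ mulS a a = a /\ inR a h.
Proof. split.
  - intros [w [xb [E [Hw Hd]]]]. pose proof Hd as Hd'.
    destruct Hd' as [_ [_ [HF _]]].
    destruct (decomp_mids Hd) as [y [_ [_ [HmF [_ HFR]]]]].
    destruct F as [[c a] h]. unfold mid in HmF; simpl in HmF. subst a.
    exists h, (st y). pose proof (st_idem HS HA y) as Hu.
    split; [|split; [exact Hu|apply (proj1 HF)]].
    destruct HFR as [_ [_ [[u [Hu1 Eu]] _]]].
    destruct u as [s|]; simpl in Eu.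
    + destruct s as [[s1 s2] s3]. unfold iota in Eu. simpl in Eu.
      injection Eu as Ea Eb Ec. destruct Hu1 as [Hs1 Hs3].
      destruct (Hrange (inR_refl (st y)) Hs1) as [Ha _]. rewrite <- Eb in Ha.
      apply inL_iff in Ha. rewrite Ea, (proj2 Ha), (pl_st HS HA). reflexivity.
    + unfold iota in Eu. injection Eu as Ea Ec. rewrite Ea, (pl_st HS HA). reflexivity.
  - intros [h [a [-> [Ha Hh]]]].
    assert (Hw : WS (jI a, a, h)).
    { split; auto. apply inL_iff. rewrite (pl_of_idem HS HA) by auto. split; apply Iid. }
    exists (jI a, a, h), (iota (mid (jI a,a,h))), (wplus (jI a, a, h)). split; auto.
    pose proof (decomp_ex _ Hw) as D.
    replace (wstar (jI a,a,h)) with (jI a, a, h) in D; auto.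
    unfold wstar. rewrite (st_of_idem HS HA Ha), (pl_of_idem HS HA Ha); auto. Qed.


Hypothesis HuI : forall e, exists x, idem allT mulS x /\ GreenL allT mulI e (jI x).
Hypothesis HuL : forall f, exists x, idem allT mulS x /\ GreenR allT mulL f (jL x).
Hypothesis H5 : W_cond5 mulS mulI mulL jI jL alpha beta.

Ltac ws := repeat (first [apply WS_closed | apply WS_iota | assumption]).

Lemma WS_Ielt g a : mulS a a = a -> inL a g -> WS (g, a, jL a).
Proof. intros Ha Hg; split; auto. apply inR_iff. rewrite (st_of_idem HS HA) by auto. split; apply Lid. Qed.
Lemma WS_Lelt h a : mulS a a = a -> inR a h -> WS (jI a, a, h).
Proof. intros Ha Hh; split; auto. apply inL_iff. rewrite (pl_of_idem HS HA) by auto. split; apply Iid. Qed.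

Lemma iota_idem_eq a : mulS a a = a -> iota a = (jI a, a, jL a).
Proof. intros Ha; unfold iota; rewrite (pl_of_idem HS HA), (st_of_idem HS HA); auto. Qed.

Lemma Iset_mul g a g' b : mulS a a = a -> mulS b b = b -> inL a g -> inL b g' ->
  mW (g, a, jL a) (g', b, jL b) = (mulI g g', mulS a b, jL (mulS a b)).
Proof. intros Ha Hb Hg Hg'.
  pose proof (WS_Ielt Ha Hg) as WE. pose proof (WS_Ielt Hb Hg') as WE'.
  assert (Hab : mulS (mulS a b) (mulS a b) = mulS a b) by (apply (idem_mul HS HA); auto).
  assert (Hy : WS (mW (g,a,jL a) (g',b,jL b))) by ws.
  assert (Hia : mW (iota a) (g,a,jL a) = iota a).
  { rewrite (iota_idem_eq Ha) in *. rewrite rect; auto. rewrite <- (iota_idem_eq Ha); apply WS_iota. }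
  assert (Hib : mW (iota b) (g',b,jL b) = iota b).
  { rewrite (iota_idem_eq Hb) in *. rewrite rect; auto. rewrite <- (iota_idem_eq Hb); apply WS_iota. }
  assert (Hiy : mW (iota (mulS a b)) (mW (g,a,jL a) (g',b,jL b)) = iota (mulS a b)).
  { rewrite (idem_comm HS HA Ha Hb) at 1. rewrite <- iota_mul.
    rewrite WS_assoc by ws. rewrite <- (WS_assoc (iota a)) by ws. rewrite Hia.
    rewrite <- WS_assoc by ws. rewrite iota_mul, <- (idem_comm HS HA Ha Hb). rewrite <- (iota_mul a b) at 1.
    rewrite WS_assoc by ws. rewrite Hib. apply iota_mul. }
  revert Hy Hiy. destruct (mW (g,a,jL a) (g',b,jL b)) as [[y1 ym] y3] eqn:Ey. intros Hy Hiy.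
  rewrite mW_eq in Ey. injection Ey as Ey1 Eym Ey3. subst ym.
  assert (Hm : WS (y1, mulS a b, jL (st (mulS a b)))) by (split; [apply Hy|apply inR_refl]).
  assert (Hyy : mW (mW (y1, mulS a b, y3) (iota (mulS a b))) (y1, mulS a b, y3) = (y1, mulS a b, y3)).
  { unfold iota. rewrite rect; auto. rewrite rect; auto. apply WS_iota. }
  rewrite WS_assoc, Hiy in Hyy by ws. unfold iota in Hyy. rewrite rect in Hyy; auto.
  2: apply WS_iota.
  injection Hyy as E3. assert (E3' : y3 = jL (st (mulS a b))) by congruence. rewrite E3'.
  assert (Hinv : inverse mulI g' (jI b)).
  { apply inL_iff in Hg'. rewrite (pl_of_idem HS HA Hb) in Hg'. destruct Hg' as [E1 E2].
    split; [rewrite E1, Iid; reflexivity|rewrite E2, Iid; reflexivity]. }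
  assert (Hinv2 : inverse mulL (jL a) (jL a)) by (split; rewrite !Lid; reflexivity).
  unfold W_cond5 in H5. destruct (H5 (conj I Ha) Hinv2 (conj I Hb) Hinv) as [A5 _].
  rewrite <- Ey1, A5, <- Ia. apply inL_iff in Hg. rewrite (pl_of_idem HS HA Ha) in Hg. rewrite (proj1 Hg).
  rewrite (st_of_idem HS HA Hab). reflexivity. Qed.


Lemma Lamset_mul h a h' b : mulS a a = a -> mulS b b = b -> inR a h -> inR b h' ->
  mW (jI a, a, h) (jI b, b, h') = (jI (mulS a b), mulS a b, mulL h h').
Proof. intros Ha Hb Hh Hh'.
  pose proof (WS_Lelt Ha Hh) as WF. pose proof (WS_Lelt Hb Hh') as WF'.
  assert (Hab : mulS (mulS a b) (mulS a b) = mulS a b) by (apply (idem_mul HS HA); auto).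
  assert (Hy : WS (mW (jI a,a,h) (jI b,b,h'))) by ws.
  assert (Hai : mW (jI a,a,h) (iota a) = iota a).
  { rewrite (iota_idem_eq Ha) in *. rewrite rect; auto. rewrite <- (iota_idem_eq Ha); apply WS_iota. }
  assert (Hbi : mW (jI b,b,h') (iota b) = iota b).
  { rewrite (iota_idem_eq Hb) in *. rewrite rect; auto. rewrite <- (iota_idem_eq Hb); apply WS_iota. }
  assert (Hyi : mW (mW (jI a,a,h) (jI b,b,h')) (iota (mulS a b)) = iota (mulS a b)).
  { rewrite (idem_comm HS HA Ha Hb) at 1. rewrite <- iota_mul.
    rewrite !WS_assoc by ws. rewrite <- (WS_assoc (jI b, b, h')) by ws. rewrite Hbi.
    rewrite iota_mul, <- (idem_comm HS HA Ha Hb). rewrite <- (iota_mul a b) at 1.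
    rewrite <- WS_assoc by ws. rewrite Hai. apply iota_mul. }
  revert Hy Hyi. destruct (mW (jI a,a,h) (jI b,b,h')) as [[y1 ym] y3] eqn:Ey. intros Hy Hyi.
  rewrite mW_eq in Ey. injection Ey as Ey1 Eym Ey3. subst ym.
  assert (Hyy : mW (y1, mulS a b, y3) (mW (iota (mulS a b)) (y1, mulS a b, y3)) = (y1, mulS a b, y3)).
  { unfold iota. rewrite rect; auto. rewrite rect; auto.
    - split; [apply inL_refl|apply Hy].
    - apply WS_iota. }
  rewrite <- WS_assoc, Hyi in Hyy by ws. unfold iota in Hyy. rewrite rect in Hyy; auto.
  2: apply WS_iota.
  injection Hyy as E1. assert (E1' : y1 = jI (pl (mulS a b))) by congruence. rewrite E1'.
  assert (Hinv : inverse mulL h (jL a)).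
  { apply inR_iff in Hh. rewrite (st_of_idem HS HA Ha) in Hh. destruct Hh as [E2 E3].
    split; [rewrite E3, E2; reflexivity|rewrite E2, E3; reflexivity]. }
  assert (Hinv2 : inverse mulI (jI b) (jI b)) by (split; rewrite !Iid; reflexivity).
  unfold W_cond5 in H5. destruct (H5 (conj I Ha) Hinv (conj I Hb) Hinv2) as [_ B5].
  rewrite <- Ey3, B5, La. apply inR_iff in Hh'. rewrite (st_of_idem HS HA Hb) in Hh'. rewrite (proj1 Hh').
  rewrite (pl_of_idem HS HA Hab). reflexivity. Qed.

Lemma Iset_sub E : Iset WS UW mW E -> WS E.
Proof. intros H; apply Iset_char in H. destruct H as [g [a [-> [Ha Hg]]]]. apply WS_Ielt; auto. Qed.
Lemma Lamset_sub F : Lamset WS UW mW F -> WS F.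
Proof. intros H; apply Lamset_char in H. destruct H as [h [a [-> [Ha Hh]]]]. apply WS_Lelt; auto. Qed.

Lemma Iset_iso : iso (Iset WS UW mW) mW allT mulI.
Proof. split; [split|split; [exact (proj1 HI)|]].
  - intros E E' HE HE'. apply Iset_char in HE, HE'.
    destruct HE as [g [a [-> [Ha Hg]]]]. destruct HE' as [g' [b [-> [Hb Hg']]]].
    rewrite Iset_mul by auto. apply Iset_char. exists (mulI g g'), (mulS a b). split; [reflexivity|].
    split; [apply (idem_mul HS HA); auto|].
    assert (Hy : WS (mW (g,a,jL a) (g',b,jL b))) by (apply WS_closed; apply WS_Ielt; auto).
    rewrite Iset_mul in Hy by auto. apply Hy.
  - intros; apply WS_assoc; apply Iset_sub; auto.
  - exists (fun w => fst (fst w)). split; [intros; exact I|]. split; [|split].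
    + intros E E' HE HE'. apply Iset_char in HE, HE'.
      destruct HE as [g [a [-> [Ha Hg]]]]. destruct HE' as [g' [b [-> [Hb Hg']]]]. simpl. intros <-.
      apply inL_iff in Hg, Hg'. rewrite (pl_of_idem HS HA) in Hg, Hg' by auto.
      assert (E1 : mulS a b = a).
      { apply jI_inj; auto. apply (idem_mul HS HA); auto. rewrite jI_hom by auto.
        rewrite <- (proj2 Hg) at 1. rewrite Ia, (proj1 Hg'). apply Hg. }
      assert (E2 : mulS b a = b).
      { apply jI_inj; auto. apply (idem_mul HS HA); auto. rewrite jI_hom by auto.
        rewrite <- (proj2 Hg') at 1. rewrite Ia, (proj1 Hg). apply Hg'. }
      assert (a = b) by (rewrite <- E1, (idem_comm HS HA Ha Hb); exact E2). subst; reflexivity.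
    + intros g _. destruct (HuI g) as [x [[_ Hx] Hgx]]. exists (g, x, jL x). split; [|reflexivity].
      apply Iset_char. exists g, x. split; [reflexivity|]. split; auto.
      unfold inLc. rewrite (pl_of_idem HS HA Hx). exact Hgx.
    + intros E E' HE HE'. apply Iset_char in HE, HE'.
      destruct HE as [g [a [-> [Ha Hg]]]]. destruct HE' as [g' [b [-> [Hb Hg']]]].
      rewrite Iset_mul by auto. reflexivity. Qed.

Lemma Lamset_iso : iso (Lamset WS UW mW) mW allT mulL.
Proof. split; [split|split; [exact (proj1 HL)|]].
  - intros F F' HF HF'. apply Lamset_char in HF, HF'.
    destruct HF as [h [a [-> [Ha Hh]]]]. destruct HF' as [h' [b [-> [Hb Hh']]]].
    rewrite Lamset_mul by auto. apply Lamset_char. exists (mulL h h'), (mulS a b). split; [reflexivity|].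
    split; [apply (idem_mul HS HA); auto|].
    assert (Hy : WS (mW (jI a,a,h) (jI b,b,h'))) by (apply WS_closed; apply WS_Lelt; auto).
    rewrite Lamset_mul in Hy by auto. apply Hy.
  - intros; apply WS_assoc; apply Lamset_sub; auto.
  - exists (fun w => snd w). split; [intros; exact I|]. split; [|split].
    + intros F F' HF HF'. apply Lamset_char in HF, HF'.
      destruct HF as [h [a [-> [Ha Hh]]]]. destruct HF' as [h' [b [-> [Hb Hh']]]]. simpl. intros <-.
      apply inR_iff in Hh, Hh'. rewrite (st_of_idem HS HA) in Hh, Hh' by auto.
      assert (E1 : mulS a b = b).
      { apply jL_inj; auto. apply (idem_mul HS HA); auto. rewrite jL_hom by auto.
        rewrite <- (proj2 Hh') at 1. rewrite <- La, (proj1 Hh). apply Hh'. }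
      assert (E2 : mulS b a = a).
      { apply jL_inj; auto. apply (idem_mul HS HA); auto. rewrite jL_hom by auto.
        rewrite <- (proj2 Hh) at 1. rewrite <- La, (proj1 Hh'). apply Hh. }
      assert (a = b) by (rewrite <- E2, (idem_comm HS HA Hb Ha); exact E1). subst; reflexivity.
    + intros h _. destruct (HuL h) as [x [[_ Hx] Hhx]]. exists (jI x, x, h). split; [|reflexivity].
      apply Lamset_char. exists h, x. split; [reflexivity|]. split; auto.
      unfold inRc. rewrite (st_of_idem HS HA Hx). exact Hhx.
    + intros F F' HF HF'. apply Lamset_char in HF, HF'.
      destruct HF as [h [a [-> [Ha Hh]]]]. destruct HF' as [h' [b [-> [Hb Hh']]]].
      rewrite Lamset_mul by auto. reflexivity. Qed.

End WA.

End Am.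
Import Am.

Module PAm.
Set Implicit Arguments.

Lemma partA (S0 : Type) (mulS : S0 -> S0 -> S0) (TI : Type) (mulI : TI -> TI -> TI)
          (TL : Type) (mulL : TL -> TL -> TL) (jI : S0 -> TI) (jL : S0 -> TL)
          (alpha : S0 -> S0 -> TL -> TI -> TI) (beta : S0 -> S0 -> TL -> TI -> TL) :
     W_data mulS mulI mulL jI jL alpha beta ->
     is_semigroup (Wset mulS mulI mulL jI jL) (mulW mulS mulI mulL alpha beta) /\
     quasi_adequate (Wset mulS mulI mulL jI jL) (mulW mulS mulI mulL alpha beta) /\
     exists U : TI * S0 * TL -> Prop,
       admissible (Wset mulS mulI mulL jI jL) U (mulW mulS mulI mulL alpha beta) /\
       iso U (mulW mulS mulI mulL alpha beta) allT mulS /\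
       (W_cond5 mulS mulI mulL jI jL alpha beta ->
          iso (Iset (Wset mulS mulI mulL jI jL) U (mulW mulS mulI mulL alpha beta))
              (mulW mulS mulI mulL alpha beta) allT mulI /\
          iso (Lamset (Wset mulS mulI mulL jI jL) U (mulW mulS mulI mulL alpha beta))
              (mulW mulS mulI mulL alpha beta) allT mulL).
Proof.
 intros [HS [HA [HI [HL [HslI [HslL [HuI [HuL [Hrange [H1 [H2 [H3 H4]]]]]]]]]]]].
 split; [eapply W_semigroup; eauto|]. split; [eapply W_quasi; eauto|].
 exists (imQ (iota mulS jI jL)). split; [eapply W_admissible; eauto|]. split; [eapply U_iso; eauto|].
 intros H5; split; [eapply Iset_iso; eauto|eapply Lamset_iso; eauto].
Qed.

End PAm.
Import PAm.

Module Bm.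
Set Implicit Arguments.

Lemma Rstar_ext T (P Q : T -> Prop) mul a b : (forall x, P x <-> Q x) -> (Rstar P mul a b <-> Rstar Q mul a b).
Proof. intros H. unfold Rstar. split; intros [Ha [Hb H']]; (split; [apply H; auto|split; [apply H; auto|]]);
  intros x y Hx Hy; apply H'; destruct x; destruct y; simpl in *; try apply H; auto. Qed.
Lemma Lstar_ext T (P Q : T -> Prop) mul a b : (forall x, P x <-> Q x) -> (Lstar P mul a b <-> Lstar Q mul a b).
Proof. intros H. unfold Lstar. split; intros [Ha [Hb H']]; (split; [apply H; auto|split; [apply H; auto|]]);
  intros x y Hx Hy; apply H'; destruct x; destruct y; simpl in *; try apply H; auto. Qed.

Lemma triple_inj {A B C : Type} (a a' : A) (b b' : B) (c c' : C) :
  (a, b, c) = (a', b', c') -> a = a' /\ b = b' /\ c = c'.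
Proof. intros H; injection H; auto. Qed.

Section B.
Variables (T : Type) (mul : T -> T -> T) (U : T -> Prop).
Hypothesis Hsg : is_semigroup allT mul.
Hypothesis Had : admissible allT U mul.
Set Default Proof Using "Hsg Had".

Lemma tassoc a b c : mul (mul a b) c = mul a (mul b c).
Proof. apply (proj2 Hsg); exact I. Qed.
Lemma tassoc' : forall a b c : T, allT a -> allT b -> allT c -> mul (mul a b) c = mul a (mul b c).
Proof. intros; apply tassoc. Qed.

Lemma idem_closed e f : mul e e = e -> mul f f = f -> mul (mul e f) (mul e f) = mul e f.
Proof. intros He Hf. destruct Had as [[_ H] _]. apply (H e f (conj I He) (conj I Hf)). Qed.
Lemma Usub_star : star_subsemigroup allT U mul.
Proof. apply (proj1 (proj1 (proj2 Had))). Qed.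
Lemma Ucl a b : U a -> U b -> U (mul a b).
Proof. destruct Usub_star as [_ [[H _] _]]; auto. Qed.
Lemma U_adequate : adequate U mul.
Proof. apply (proj1 (proj2 (proj1 (proj2 Had)))). Qed.
Lemma U_abund : abundant U mul.
Proof. apply (proj1 U_adequate). Qed.
Lemma Ucomm u v : U u -> U v -> mul u u = u -> mul v v = v -> mul u v = mul v u.
Proof. intros; apply (proj2 U_adequate); split; auto. Qed.
Lemma RU a b : U a -> U b -> (Rstar U mul a b <-> Rstar allT mul a b).
Proof. destruct Usub_star as [_ [_ [_ [_ H]]]]; auto. Qed.
Lemma LU a b : U a -> U b -> (Lstar U mul a b <-> Lstar allT mul a b).
Proof. destruct Usub_star as [_ [_ [_ [H _]]]]; auto. Qed.
Lemma bar_ex x : exists! xb, is_bar allT U mul x xb.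
Proof. apply (proj2 (proj2 (proj1 (proj2 Had)))); exact I. Qed.
Lemma bar_unique z xb xb' : is_bar allT U mul z xb -> is_bar allT U mul z xb' -> xb = xb'.
Proof. intros H1 H2. destruct (bar_ex z) as [b [_ Hb]]. rewrite <- (Hb _ H1). apply Hb; auto. Qed.
Lemma bar_hom x y xb yb : is_bar allT U mul x xb -> is_bar allT U mul y yb ->
  is_bar allT U mul (mul x y) (mul xb yb).
Proof. apply (proj2 (proj2 Had)); exact I. Qed.

Lemma Uidem_R p p' x : U p -> U p' -> U x -> mul p p = p -> mul p' p' = p' ->
  Rstar U mul x p -> Rstar U mul x p' -> p = p'.
Proof. intros Hp Hp' Hx E E' H H'.
  assert (Hr : Rstar U mul p p') by (apply Rstar_trans with x; auto; apply Rstar_sym; auto).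
  destruct (Rstar_idem (conj Hp E) (conj Hp' E') Hr) as [E1 E2].
  rewrite <- E2, Ucomm; auto. Qed.
Lemma Uidem_L p p' x : U p -> U p' -> U x -> mul p p = p -> mul p' p' = p' ->
  Lstar U mul x p -> Lstar U mul x p' -> p = p'.
Proof. intros Hp Hp' Hx E E' H H'.
  assert (Hr : Lstar U mul p p') by (apply Lstar_trans with x; auto; apply Lstar_sym; auto).
  destruct (Lstar_idem (conj Hp E) (conj Hp' E') Hr) as [E1 E2].
  rewrite <- E2, Ucomm; auto. Qed.

Lemma decomp_unpack z xb e f : decomp allT U mul z xb e f ->
  exists p q, U xb /\ mul e e = e /\ mul f f = f /\ z = mul (mul e xb) f /\
    U p /\ mul p p = p /\ Rstar U mul xb p /\ U q /\ mul q q = q /\ Lstar U mul xb q /\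
    mul e p = e /\ mul p e = p /\ mul q f = f /\ mul f q = q.
Proof. intros [Hxb [[_ He] [[_ Hf] [Ez [p [q [[Hp Hpp] [Hpr [[Hq Hqq] [Hql [HL HR]]]]]]]]]]].
  apply (GreenL_elim tassoc') in HL; [|split; [exact I|exact He]|split; [exact I|exact Hpp]].
  apply (GreenR_elim tassoc') in HR; [|split; [exact I|exact Hf]|split; [exact I|exact Hqq]].
  destruct HL as [HL1 HL2]. destruct HR as [HR1 HR2].
  exists p, q. repeat (split; [assumption|]); assumption. Qed.

Lemma decomp_Rstar z xb e f : decomp allT U mul z xb e f -> Rstar allT mul z e.
Proof. intros D. destruct (decomp_unpack D) as [p [q [Hxb [He [Hf [Ez [Hp [Hpp [Hpr [Hq [Hqq [Hql [E1 [E2 [E3 E4]]]]]]]]]]]]]]].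
  apply RU in Hpr; auto. apply LU in Hql; auto.
  assert (Hxq : mul xb q = xb) by (apply (Lstar_use1 (Lstar_sym Hql) I Hqq)).
  apply Rstar_intro; [exact I|split; [exact I|exact He]| |].
  - rewrite Ez, !tassoc, <- (tassoc e e), He; reflexivity.
  - intros s t _ _. split.
    + intros E. assert (E' : mul s (mul e xb) = mul t (mul e xb)).
      { assert (Hz : mul z q = mul e xb) by (rewrite Ez, tassoc, E4, tassoc, Hxq; reflexivity).
        rewrite <- Hz, <- !tassoc, E; reflexivity. }
      rewrite <- !tassoc in E'. apply (Rstar_use2 Hpr I I) in E'.
      rewrite !tassoc, E1 in E'. exact E'.
    + intros E. rewrite Ez, <- !tassoc, E; reflexivity. Qed.

Lemma decomp_Lstar z xb e f : decomp allT U mul z xb e f -> Lstar allT mul z f.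
Proof. intros D. destruct (decomp_unpack D) as [p [q [Hxb [He [Hf [Ez [Hp [Hpp [Hpr [Hq [Hqq [Hql [E1 [E2 [E3 E4]]]]]]]]]]]]]]].
  apply RU in Hpr; auto. apply LU in Hql; auto.
  assert (Hpx : mul p xb = xb) by (apply (Rstar_use1 (Rstar_sym Hpr) I Hpp)).
  apply Lstar_intro; [exact I|split; [exact I|exact Hf]| |].
  - rewrite Ez, !tassoc, Hf; reflexivity.
  - intros s t _ _. split.
    + intros E. assert (E' : mul (mul xb f) s = mul (mul xb f) t).
      { assert (Hz : mul p z = mul xb f) by (rewrite Ez, <- !tassoc, E2, Hpx; reflexivity).
        rewrite <- Hz, !tassoc, E; reflexivity. }
      rewrite !tassoc in E'. apply (Lstar_use2 Hql I I) in E'.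
      rewrite <- !tassoc, E3 in E'. exact E'.
    + intros E. rewrite Ez, !tassoc, E; reflexivity. Qed.

Lemma decomp_unique z xb e f xb' e' f' : decomp allT U mul z xb e f -> decomp allT U mul z xb' e' f' ->
  xb = xb' /\ e = e' /\ f = f'.
Proof. intros D D'.
  assert (Exb : xb = xb') by (apply bar_unique with z; [exists e, f|exists e', f']; auto).
  subst xb'. split; [reflexivity|].
  pose proof (decomp_Rstar D) as R1. pose proof (decomp_Rstar D') as R2.
  pose proof (decomp_Lstar D) as L1. pose proof (decomp_Lstar D') as L2.
  destruct (decomp_unpack D) as [p [q [Hxb [He [Hf [Ez [Hp [Hpp [Hpr [Hq [Hqq [Hql [E1 [E2 [E3 E4]]]]]]]]]]]]]]].
  destruct (decomp_unpack D') as [p' [q' [_ [He' [Hf' [Ez' [Hp' [Hpp' [Hpr' [Hq' [Hqq' [Hql' [E1' [E2' [E3' E4']]]]]]]]]]]]]]].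
  assert (Ep : p = p') by (apply (Uidem_R Hp Hp' Hxb); auto).
  assert (Eq : q = q') by (apply (Uidem_L Hq Hq' Hxb); auto).
  subst p' q'. split.
  - assert (Hr : Rstar allT mul e e') by (apply Rstar_trans with z; auto; apply Rstar_sym; auto).
    destruct (Rstar_idem (conj I He) (conj I He') Hr) as [F1 F2].
    rewrite <- F1. symmetry. rewrite <- E1 at 1. rewrite tassoc, E2'. exact E1.
  - assert (Hr : Lstar allT mul f f') by (apply Lstar_trans with z; auto; apply Lstar_sym; auto).
    destruct (Lstar_idem (conj I Hf) (conj I Hf') Hr) as [F1 F2].
    rewrite <- F1. rewrite <- E3' at 1. rewrite <- tassoc, E4. exact E3'. Qed.

Definition dec (z : T) : T * T * T :=
  epsilon (inhabits (z, z, z)) (fun t => decomp allT U mul z (fst (fst t)) (snd (fst t)) (snd t)).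
Definition bar z := fst (fst (dec z)).
Definition eI z := snd (fst (dec z)).
Definition fL z := snd (dec z).
Lemma dec_spec z : decomp allT U mul z (bar z) (eI z) (fL z).
Proof. unfold bar, eI, fL, dec. apply epsilon_spec.
  destruct (bar_ex z) as [xb [[e [f D]] _]]. exists (xb, e, f); exact D. Qed.
Lemma dec_eq z xb e f : decomp allT U mul z xb e f -> xb = bar z /\ e = eI z /\ f = fL z.
Proof. intros D. apply (decomp_unique D (dec_spec z)). Qed.


Definition Ipred (e : T) : Prop := mul e e = e /\ exists u, U u /\ mul u u = u /\ mul e u = e /\ mul u e = u.
Definition Lpred (f : T) : Prop := mul f f = f /\ exists v, U v /\ mul v v = v /\ mul v f = f /\ mul f v = v.

Lemma decomp_I e u : mul e e = e -> U u -> mul u u = u -> mul e u = e -> mul u e = u ->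
  decomp allT U mul e u e u.
Proof. intros He Hu Huu E1 E2. split; [auto|]. split; [split; [exact I|auto]|]. split; [split; [exact I|auto]|].
  split; [rewrite tassoc, Huu, E1; reflexivity|]. exists u, u.
  split; [split; auto|]. split; [apply Rstar_refl; auto|]. split; [split; auto|]. split; [apply Lstar_refl; auto|].
  split; [apply GreenL_intro; auto; exact I|apply GreenR_intro; auto; exact I]. Qed.
Lemma decomp_L f v : mul f f = f -> U v -> mul v v = v -> mul v f = f -> mul f v = v ->
  decomp allT U mul f v v f.
Proof. intros Hf Hv Hvv E1 E2. split; [auto|]. split; [split; [exact I|auto]|]. split; [split; [exact I|auto]|].
  split; [rewrite Hvv, E1; reflexivity|]. exists v, v.
  split; [split; auto|]. split; [apply Rstar_refl; auto|]. split; [split; auto|]. split; [apply Lstar_refl; auto|].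
  split; [apply GreenL_intro; auto; exact I|apply GreenR_intro; auto; exact I]. Qed.
Lemma decomp_E u : U u -> mul u u = u -> decomp allT U mul u u u u.
Proof. intros; apply decomp_I; auto. Qed.

Lemma isbar_I e u : mul e e = e -> U u -> mul u u = u -> mul e u = e -> mul u e = u -> is_bar allT U mul e u.
Proof. intros; exists e, u; apply decomp_I; auto. Qed.
Lemma isbar_L f v : mul f f = f -> U v -> mul v v = v -> mul v f = f -> mul f v = v -> is_bar allT U mul f v.
Proof. intros; exists v, f; apply decomp_L; auto. Qed.

Lemma I_closed_w e u e' v :
  mul e e = e -> U u -> mul u u = u -> mul e u = e -> mul u e = u ->
  mul e' e' = e' -> U v -> mul v v = v -> mul e' v = e' -> mul v e' = v ->
  mul (mul e e') (mul u v) = mul e e' /\ mul (mul u v) (mul e e') = mul u v.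
Proof. intros He Hu Huu E1 E2 He' Hv Hvv E1' E2'.
  assert (Wy : mul (mul u v) (mul e e') = mul u v).
  { rewrite (Ucomm Hu Hv) by auto. rewrite tassoc, <- (tassoc u e), E2, <- tassoc, <- (Ucomm Hu Hv) by auto.
    rewrite tassoc, E2'; reflexivity. }
  split; [|exact Wy].
  assert (Hw : U (mul u v)) by (apply Ucl; auto).
  assert (Hww : mul (mul u v) (mul u v) = mul u v).
  { rewrite tassoc, <- (tassoc v u v), <- (Ucomm Hu Hv) by auto. rewrite tassoc, Hvv, <- tassoc, Huu; reflexivity. }
  assert (B : is_bar allT U mul (mul e e') (mul u v)) by (apply bar_hom; [apply isbar_I|apply isbar_I]; auto).
  destruct B as [h [k D]].
  destruct (decomp_unpack D) as [p [q [_ [Hh [Hk [Ey [Hp [Hpp [Hpr [Hq [Hqq [Hql [F1 [F2 [F3 F4]]]]]]]]]]]]]]].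
  assert (Ep : mul u v = p) by (apply (Uidem_R Hw Hp Hw); auto; apply Rstar_refl; auto).
  assert (Eq : mul u v = q) by (apply (Uidem_L Hw Hq Hw); auto; apply Lstar_refl; auto).
  rewrite <- Ep in F1, F2. rewrite <- Eq in F3, F4.
  assert (Y : mul e e' = mul h k) by (rewrite Ey, F1; reflexivity).
  assert (Yw : mul (mul e e') (mul u v) = h) by (rewrite Y, tassoc, F4, F1; reflexivity).
  rewrite Yw.
  assert (A1 : mul h (mul e e') = mul e e') by (rewrite Y, <- tassoc, Hh; reflexivity).
  assert (A2 : mul h (mul e e') = h) by (rewrite <- Yw at 1; rewrite tassoc, Wy; exact Yw).
  congruence. Qed.


Lemma L_closed_w f v f' v' :
  mul f f = f -> U v -> mul v v = v -> mul v f = f -> mul f v = v ->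
  mul f' f' = f' -> U v' -> mul v' v' = v' -> mul v' f' = f' -> mul f' v' = v' ->
  mul (mul f f') (mul v v') = mul v v' /\ mul (mul v v') (mul f f') = mul f f'.
Proof. intros Hf Hv Hvv E1 E2 Hf' Hv' Hvv' E1' E2'.
  assert (yW : mul (mul f f') (mul v v') = mul v v').
  { rewrite (Ucomm Hv Hv') by auto. rewrite tassoc, <- (tassoc f' v' v), E2', (Ucomm Hv' Hv) by auto.
    rewrite <- tassoc, E2; reflexivity. }
  split; [exact yW|].
  assert (Hw : U (mul v v')) by (apply Ucl; auto).
  assert (Hww : mul (mul v v') (mul v v') = mul v v').
  { rewrite tassoc, <- (tassoc v' v v'), <- (Ucomm Hv Hv') by auto. rewrite tassoc, Hvv', <- tassoc, Hvv; reflexivity. }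
  assert (B : is_bar allT U mul (mul f f') (mul v v')) by (apply bar_hom; [apply isbar_L|apply isbar_L]; auto).
  destruct B as [h [k D]].
  destruct (decomp_unpack D) as [p [q [_ [Hh [Hk [Ey [Hp [Hpp [Hpr [Hq [Hqq [Hql [F1 [F2 [F3 F4]]]]]]]]]]]]]]].
  assert (Ep : mul v v' = p) by (apply (Uidem_R Hw Hp Hw); auto; apply Rstar_refl; auto).
  assert (Eq : mul v v' = q) by (apply (Uidem_L Hw Hq Hw); auto; apply Lstar_refl; auto).
  rewrite <- Ep in F1, F2. rewrite <- Eq in F3, F4.
  assert (Y : mul f f' = mul h k) by (rewrite Ey, F1; reflexivity).
  assert (Wy' : mul (mul v v') (mul f f') = k) by (rewrite Y, <- tassoc, F2, F3; reflexivity).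
  rewrite Wy'.
  assert (A1 : mul (mul f f') k = mul f f') by (rewrite Y, tassoc, Hk; reflexivity).
  assert (A2 : mul (mul f f') k = k) by (rewrite <- Wy' at 1; rewrite <- tassoc, yW; exact Wy').
  congruence. Qed.

Lemma I_closed e e' : Ipred e -> Ipred e' -> Ipred (mul e e').
Proof. intros [He [u [Hu [Huu [E1 E2]]]]] [He' [v [Hv [Hvv [E1' E2']]]]].
  split; [apply idem_closed; auto|]. exists (mul u v). split; [apply Ucl; auto|].
  split; [rewrite tassoc, <- (tassoc v u v), <- (Ucomm Hu Hv) by auto; rewrite tassoc, Hvv, <- tassoc, Huu; reflexivity|].
  apply I_closed_w; auto. Qed.
Lemma L_closed f f' : Lpred f -> Lpred f' -> Lpred (mul f f').
Proof. intros [Hf [v [Hv [Hvv [E1 E2]]]]] [Hf' [v' [Hv' [Hvv' [E1' E2']]]]].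
  split; [apply idem_closed; auto|]. exists (mul v v'). split; [apply Ucl; auto|].
  split; [rewrite tassoc, <- (tassoc v' v v'), <- (Ucomm Hv Hv') by auto; rewrite tassoc, Hvv', <- tassoc, Hvv; reflexivity|].
  destruct (L_closed_w Hf Hv Hvv E1 E2 Hf' Hv' Hvv' E1' E2'); auto. Qed.

Lemma I_lrb e e' : Ipred e -> Ipred e' -> mul (mul e e') e = mul e e'.
Proof. intros [He [u [Hu [Huu [E1 E2]]]]] [He' [v [Hv [Hvv [E1' E2']]]]].
  destruct (I_closed_w He Hu Huu E1 E2 He' Hv Hvv E1' E2') as [Y1 Y2].
  assert (Hw : U (mul u v)) by (apply Ucl; auto).
  assert (Hww : mul (mul u v) (mul u v) = mul u v).
  { rewrite tassoc, <- (tassoc v u v), <- (Ucomm Hu Hv) by auto. rewrite tassoc, Hvv, <- tassoc, Huu; reflexivity. }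
  assert (Hy : mul (mul e e') (mul e e') = mul e e') by (apply idem_closed; auto).
  destruct (I_closed_w Hy Hw Hww Y1 Y2 He Hu Huu E1 E2) as [Z1 _].
  assert (Wu : mul (mul u v) u = mul u v).
  { rewrite tassoc, <- (Ucomm Hu Hv) by auto. rewrite <- tassoc, Huu; reflexivity. }
  rewrite Wu in Z1.
  assert (A1 : mul (mul (mul e e') e) (mul e e') = mul (mul e e') e).
  { rewrite <- Z1 at 1. rewrite tassoc, Y2. exact Z1. }
  assert (A2 : mul (mul (mul e e') e) (mul e e') = mul e e').
  { rewrite tassoc, <- (tassoc e e e'), He. exact Hy. }
  congruence. Qed.

Lemma L_rrb f f' : Lpred f -> Lpred f' -> mul (mul f f') f = mul f' f.
Proof. intros [Hf [v [Hv [Hvv [E1 E2]]]]] [Hf' [v' [Hv' [Hvv' [E1' E2']]]]].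
  destruct (L_closed_w Hf' Hv' Hvv' E1' E2' Hf Hv Hvv E1 E2) as [Y1 Y2].
  assert (Hw : U (mul v' v)) by (apply Ucl; auto).
  assert (Hww : mul (mul v' v) (mul v' v) = mul v' v).
  { rewrite tassoc, <- (tassoc v v' v), <- (Ucomm Hv' Hv) by auto. rewrite tassoc, Hvv, <- tassoc, Hvv'; reflexivity. }
  assert (Hy : mul (mul f' f) (mul f' f) = mul f' f) by (apply idem_closed; auto).
  destruct (L_closed_w Hf Hv Hvv E1 E2 Hy Hw Hww Y2 Y1) as [_ Z2].
  assert (Wu : mul v (mul v' v) = mul v' v).
  { rewrite (Ucomm Hv' Hv) by auto. rewrite <- tassoc, Hvv; reflexivity. }
  rewrite Wu in Z2.
  rewrite tassoc.
  assert (A1 : mul (mul f' f) (mul f (mul f' f)) = mul f (mul f' f)).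
  { rewrite <- Z2 at 1. rewrite <- tassoc, Y1. exact Z2. }
  assert (A2 : mul (mul f' f) (mul f (mul f' f)) = mul f' f).
  { rewrite <- (tassoc (mul f' f) f (mul f' f)), (tassoc f' f f), Hf. exact Hy. }
  congruence. Qed.


Lemma inv_unique b u x : is_bar allT U mul b u -> U u -> mul u u = u -> U x -> mul x x = x ->
  mul (mul b x) b = b -> mul (mul x b) x = x -> x = u.
Proof. intros Bb Hu Huu Hx Hxx E1 E2.
  assert (Bx : is_bar allT U mul x x) by (apply isbar_I; auto).
  assert (F1 : mul (mul u x) u = u).
  { apply bar_unique with b; auto. rewrite <- E1 at 1. apply bar_hom; [apply bar_hom|]; auto. }
  assert (F2 : mul (mul x u) x = x).
  { apply bar_unique with x; auto. rewrite <- E2 at 1. apply bar_hom; [apply bar_hom|]; auto. }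
  rewrite tassoc, (Ucomm Hx Hu), <- tassoc, Huu in F1 by auto.
  rewrite tassoc, (Ucomm Hu Hx), <- tassoc, Hxx in F2 by auto.
  transitivity (mul x u); [symmetry; exact F2|]. rewrite <- (Ucomm Hu Hx) by auto. exact F1. Qed.


Definition S0 := {x : T | U x}.
Definition mulS (x y : S0) : S0 := exist U (mul (proj1_sig x) (proj1_sig y)) (Ucl (proj2_sig x) (proj2_sig y)).
Definition TI := {e : T | Ipred e}.
Definition mulI (a b : TI) : TI := exist Ipred (mul (proj1_sig a) (proj1_sig b)) (I_closed (proj2_sig a) (proj2_sig b)).
Definition TL := {f : T | Lpred f}.
Definition mulL (a b : TL) : TL := exist Lpred (mul (proj1_sig a) (proj1_sig b)) (L_closed (proj2_sig a) (proj2_sig b)).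

Lemma val_mulS x y : proj1_sig (mulS x y) = mul (proj1_sig x) (proj1_sig y).
Proof. reflexivity. Qed.

Lemma S0_semigroup : is_semigroup allT mulS.
Proof. split; [intros; exact I|]. intros a b c _ _ _; apply sig_eq; simpl; apply tassoc. Qed.

Lemma imQ_U b : imQ (@proj1_sig T U) b <-> U b.
Proof. split; [intros [a ->]; apply proj2_sig|intros H; exists (exist U b H); reflexivity]. Qed.

Lemma S0_R x y : Rstar allT mulS x y <-> Rstar U mul (proj1_sig x) (proj1_sig y).
Proof. rewrite <- (@Rstar_transfer S0 T mulS mul (@proj1_sig T U) (fun a b => eq_refl) (@sig_eq T U)).
  apply Rstar_ext. intros; apply imQ_U. Qed.
Lemma S0_L x y : Lstar allT mulS x y <-> Lstar U mul (proj1_sig x) (proj1_sig y).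
Proof. rewrite <- (@Lstar_transfer S0 T mulS mul (@proj1_sig T U) (fun a b => eq_refl) (@sig_eq T U)).
  apply Lstar_ext. intros; apply imQ_U. Qed.
Lemma S0_idem x : mulS x x = x <-> mul (proj1_sig x) (proj1_sig x) = proj1_sig x.
Proof. split; [intros E; apply (f_equal (@proj1_sig T U)) in E; exact E|intros E; apply sig_eq; exact E]. Qed.

Lemma S0_adequate : adequate allT mulS.
Proof. split.
  - intros [x Hx] _. destruct (U_abund Hx) as [[p [[Hp Hpp] Hpr]] [q [[Hq Hqq] Hql]]]. split.
    + exists (exist U p Hp). split; [split; [exact I|apply S0_idem; exact Hpp]|apply S0_R; exact Hpr].
    + exists (exist U q Hq). split; [split; [exact I|apply S0_idem; exact Hqq]|apply S0_L; exact Hql].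
  - intros [e He] [f Hf] [_ E1] [_ E2]. apply S0_idem in E1, E2. apply sig_eq; simpl in *. apply Ucomm; auto. Qed.

Local Notation pl := (plusf mulS).
Local Notation st := (starf mulS).
Definition pv (x : S0) : T := proj1_sig (pl x).
Definition sv (x : S0) : T := proj1_sig (st x).

Lemma pv_U x : U (pv x).
Proof. unfold pv, sv; apply proj2_sig. Qed.
Lemma sv_U x : U (sv x).
Proof. unfold pv, sv; apply proj2_sig. Qed.
Lemma pv_idem x : mul (pv x) (pv x) = pv x.
Proof. apply S0_idem, (pl_idem S0_semigroup S0_adequate). Qed.
Lemma sv_idem x : mul (sv x) (sv x) = sv x.
Proof. apply S0_idem, (st_idem S0_semigroup S0_adequate). Qed.
Lemma pv_R x : Rstar U mul (proj1_sig x) (pv x).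
Proof. apply S0_R, (pl_spec S0_semigroup S0_adequate). Qed.
Lemma sv_L x : Lstar U mul (proj1_sig x) (sv x).
Proof. apply S0_L, (st_spec S0_semigroup S0_adequate). Qed.
Lemma pv_left x : mul (pv x) (proj1_sig x) = proj1_sig x.
Proof. exact (f_equal (@proj1_sig T U) (pl_left S0_semigroup S0_adequate x)). Qed.
Lemma sv_right x : mul (proj1_sig x) (sv x) = proj1_sig x.
Proof. exact (f_equal (@proj1_sig T U) (st_right S0_semigroup S0_adequate x)). Qed.
Lemma pv_uniq x p : U p -> mul p p = p -> Rstar U mul (proj1_sig x) p -> p = pv x.
Proof. intros Hp Hpp H. apply (Uidem_R Hp (pv_U x) (proj2_sig x)); auto. apply pv_idem. apply pv_R. Qed.
Lemma sv_uniq x q : U q -> mul q q = q -> Lstar U mul (proj1_sig x) q -> q = sv x.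
Proof. intros Hq Hqq H. apply (Uidem_L Hq (sv_U x) (proj2_sig x)); auto. apply sv_idem. apply sv_L. Qed.
Lemma pv_of_idem x : mul (proj1_sig x) (proj1_sig x) = proj1_sig x -> pv x = proj1_sig x.
Proof. intros H. unfold pv. rewrite (pl_of_idem S0_semigroup S0_adequate); auto. apply S0_idem; auto. Qed.
Lemma sv_of_idem x : mul (proj1_sig x) (proj1_sig x) = proj1_sig x -> sv x = proj1_sig x.
Proof. intros H. unfold sv. rewrite (st_of_idem S0_semigroup S0_adequate); auto. apply S0_idem; auto. Qed.

Lemma U_Ipred u : U u -> mul u u = u -> Ipred u.
Proof. intros; split; auto. exists u; auto. Qed.
Lemma U_Lpred u : U u -> mul u u = u -> Lpred u.
Proof. intros; split; auto. exists u; auto. Qed.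

Definition jI (x : S0) : TI := exist Ipred (pv x) (U_Ipred (pv_U x) (pv_idem x)).
Definition jL (x : S0) : TL := exist Lpred (sv x) (U_Lpred (sv_U x) (sv_idem x)).

Lemma eI_Ipred z : Ipred (eI z).
Proof. destruct (decomp_unpack (dec_spec z)) as [p [q [X1 [He [X2 [X3 [Hp [Hpp [X4 [X5 [X6 [X7 [E1 [E2 X8]]]]]]]]]]]]]].
  split; auto. exists p; auto. Qed.
Lemma fL_Lpred z : Lpred (fL z).
Proof. destruct (decomp_unpack (dec_spec z)) as [p [q [X1 [X2 [Hf [X3 [X4 [X5 [X6 [Hq [Hqq [X7 [X8 [X9 [E3 E4]]]]]]]]]]]]]]].
  split; auto. exists q; auto. Qed.

Definition zv (x y : S0) (f : TL) (g : TI) : T :=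
  mul (mul (mul (proj1_sig x) (proj1_sig f)) (proj1_sig g)) (proj1_sig y).
Definition alpha (x y : S0) (f : TL) (g : TI) : TI := exist Ipred (eI (zv x y f g)) (eI_Ipred _).
Definition beta (x y : S0) (f : TL) (g : TI) : TL := exist Lpred (fL (zv x y f g)) (fL_Lpred _).

Lemma TI_LRB : left_regular_band mulI.
Proof. split; [split; [intros; exact I|intros; apply sig_eq; apply tassoc]|split].
  - intros [e He]; apply sig_eq; exact (proj1 He).
  - intros [e He] [f Hf]; apply sig_eq; simpl. apply I_lrb; auto. Qed.
Lemma TL_RRB : right_regular_band mulL.
Proof. split; [split; [intros; exact I|intros; apply sig_eq; apply tassoc]|split].
  - intros [e He]; apply sig_eq; exact (proj1 He).
  - intros [e He] [f Hf]; apply sig_eq; simpl. apply L_rrb; auto. Qed.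

Lemma pv_pl x : pv (pl x) = pv x.
Proof. unfold pv; rewrite (pl_pl S0_semigroup S0_adequate); reflexivity. Qed.
Lemma sv_st x : sv (st x) = sv x.
Proof. unfold sv; rewrite (st_st S0_semigroup S0_adequate); reflexivity. Qed.

Lemma inL_val x e : inLc mulS mulI jI x e <->
  mul (proj1_sig e) (pv x) = proj1_sig e /\ mul (pv x) (proj1_sig e) = pv x.
Proof. unfold inLc. rewrite (GL_iff TI_LRB). split; intros [E1 E2]; split.
  - pose proof (f_equal (@proj1_sig T Ipred) E1) as H; simpl in H; rewrite pv_pl in H; exact H.
  - pose proof (f_equal (@proj1_sig T Ipred) E2) as H; simpl in H; rewrite pv_pl in H; exact H.
  - apply sig_eq; simpl; rewrite pv_pl; exact E1.
  - apply sig_eq; simpl; rewrite pv_pl; exact E2. Qed.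
Lemma inR_val x f : inRc mulS mulL jL x f <->
  mul (sv x) (proj1_sig f) = proj1_sig f /\ mul (proj1_sig f) (sv x) = sv x.
Proof. unfold inRc. rewrite (GR_iff TL_RRB). split; intros [E1 E2]; split.
  - pose proof (f_equal (@proj1_sig T Lpred) E1) as H; simpl in H; rewrite sv_st in H; exact H.
  - pose proof (f_equal (@proj1_sig T Lpred) E2) as H; simpl in H; rewrite sv_st in H; exact H.
  - apply sig_eq; simpl; rewrite sv_st; exact E1.
  - apply sig_eq; simpl; rewrite sv_st; exact E2. Qed.


Lemma idemS x : idem allT mulS x -> mul (proj1_sig x) (proj1_sig x) = proj1_sig x.
Proof. intros [_ H]; apply S0_idem; auto. Qed.

Lemma slI : sl_transversal mulS mulI jI.
Proof. split; [|split].
  - intros e f He Hf. apply sig_eq; simpl.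
    assert (Hef : idem allT mulS (mulS e f)) by (split; [exact I|apply (idem_mul S0_semigroup S0_adequate); apply He || apply Hf]).
    rewrite !pv_of_idem; try apply idemS; auto.
  - intros e f He Hf E. apply (f_equal (@proj1_sig T Ipred)) in E; simpl in E.
    rewrite !pv_of_idem in E by (apply idemS; auto). apply sig_eq; exact E.
  - intros [b0 [Hb [u [Hu [Huu [E1 E2]]]]]]. exists (exist U u Hu). split.
    + split; [split; [exact I|apply S0_idem; exact Huu]|].
      split; apply sig_eq; simpl; rewrite pv_of_idem by exact Huu; simpl.
      * rewrite E1; exact Hb.
      * rewrite E2; exact Huu.
    + intros x' [Hx' [I1 I2]]. apply (f_equal (@proj1_sig T Ipred)) in I1, I2. simpl in I1, I2.
      rewrite pv_of_idem in I1, I2 by (apply idemS; auto).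
      apply sig_eq; simpl. symmetry. apply (inv_unique (b:=b0)); auto.
      * apply isbar_I; auto.
      * apply proj2_sig.
      * apply idemS; auto. Qed.

Lemma slL : sl_transversal mulS mulL jL.
Proof. split; [|split].
  - intros e f He Hf. apply sig_eq; simpl.
    assert (Hef : idem allT mulS (mulS e f)) by (split; [exact I|apply (idem_mul S0_semigroup S0_adequate); apply He || apply Hf]).
    rewrite !sv_of_idem; try apply idemS; auto.
  - intros e f He Hf E. apply (f_equal (@proj1_sig T Lpred)) in E; simpl in E.
    rewrite !sv_of_idem in E by (apply idemS; auto). apply sig_eq; exact E.
  - intros [b0 [Hb [u [Hu [Huu [E1 E2]]]]]]. exists (exist U u Hu). split.
    + split; [split; [exact I|apply S0_idem; exact Huu]|].
      split; apply sig_eq; simpl; rewrite sv_of_idem by exact Huu; simpl.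
      * rewrite E2; exact E1.
      * rewrite E1; exact E2.
    + intros x' [Hx' [I1 I2]]. apply (f_equal (@proj1_sig T Lpred)) in I1, I2. simpl in I1, I2.
      rewrite sv_of_idem in I1, I2 by (apply idemS; auto).
      apply sig_eq; simpl. symmetry. apply (inv_unique (b:=b0)); auto.
      * apply isbar_L; auto.
      * apply proj2_sig.
      * apply idemS; auto. Qed.

Lemma unionI : forall e : TI, exists x, idem allT mulS x /\ GreenL allT mulI e (jI x).
Proof. intros [b0 [Hb [u [Hu [Huu [E1 E2]]]]]]. exists (exist U u Hu).
  split; [split; [exact I|apply S0_idem; exact Huu]|].
  apply GreenL_intro; try exact I; apply sig_eq; simpl; rewrite pv_of_idem by exact Huu; simpl; auto. Qed.
Lemma unionL : forall f : TL, exists x, idem allT mulS x /\ GreenR allT mulL f (jL x).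
Proof. intros [b0 [Hb [u [Hu [Huu [E1 E2]]]]]]. exists (exist U u Hu).
  split; [split; [exact I|apply S0_idem; exact Huu]|].
  apply GreenR_intro; try exact I; apply sig_eq; simpl; rewrite sv_of_idem by exact Huu; simpl; auto. Qed.


Lemma decomp_S0 (z : S0) : decomp allT U mul (proj1_sig z) (proj1_sig z) (pv z) (sv z).
Proof. split; [apply proj2_sig|]. split; [split; [exact I|apply pv_idem]|]. split; [split; [exact I|apply sv_idem]|].
  split; [rewrite pv_left, sv_right; reflexivity|]. exists (pv z), (sv z).
  split; [split; [apply pv_U|apply pv_idem]|]. split; [apply pv_R|].
  split; [split; [apply sv_U|apply sv_idem]|]. split; [apply sv_L|].
  split; [apply GreenL_intro; try exact I; apply pv_idem|apply GreenR_intro; try exact I; apply sv_idem]. Qed.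
Lemma eI_S0 (z : S0) : eI (proj1_sig z) = pv z.
Proof. symmetry; apply (dec_eq (decomp_S0 z)). Qed.
Lemma fL_S0 (z : S0) : fL (proj1_sig z) = sv z.
Proof. symmetry; apply (dec_eq (decomp_S0 z)). Qed.

Lemma inL_jI u : inLc mulS mulI jI u (jI u).
Proof. apply inL_val; simpl; split; apply pv_idem. Qed.
Lemma inR_jL u : inRc mulS mulL jL u (jL u).
Proof. apply inR_val; simpl; split; apply sv_idem. Qed.

Lemma decomp_W x e f : inLc mulS mulI jI x e -> inRc mulS mulL jL x f ->
  decomp allT U mul (mul (mul (proj1_sig e) (proj1_sig x)) (proj1_sig f)) (proj1_sig x) (proj1_sig e) (proj1_sig f).
Proof. intros He Hf. apply inL_val in He. apply inR_val in Hf.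
  split; [apply proj2_sig|]. split; [split; [exact I|apply (proj1 (proj2_sig e))]|].
  split; [split; [exact I|apply (proj1 (proj2_sig f))]|]. split; [reflexivity|].
  exists (pv x), (sv x).
  split; [split; [apply pv_U|apply pv_idem]|]. split; [apply pv_R|].
  split; [split; [apply sv_U|apply sv_idem]|]. split; [apply sv_L|].
  split; [apply GreenL_intro; try exact I; apply He|apply GreenR_intro; try exact I; apply Hf]. Qed.

Lemma isbar_S0 (z : S0) : is_bar allT U mul (proj1_sig z) (proj1_sig z).
Proof. exists (pv z), (sv z); apply decomp_S0. Qed.

Lemma decomp_zv x y f g : inRc mulS mulL jL x f -> inLc mulS mulI jI y g ->
  decomp allT U mul (zv x y f g) (mul (proj1_sig x) (proj1_sig y)) (eI (zv x y f g)) (fL (zv x y f g)).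
Proof. intros Hf Hg. apply inR_val in Hf. apply inL_val in Hg.
  assert (B : is_bar allT U mul (zv x y f g) (mul (mul (mul (proj1_sig x) (sv x)) (pv y)) (proj1_sig y))).
  { unfold zv. apply bar_hom; [apply bar_hom; [apply bar_hom|]|].
    - apply isbar_S0.
    - apply isbar_L; try apply Hf. apply (proj1 (proj2_sig f)). apply sv_U. apply sv_idem.
    - apply isbar_I; try apply Hg. apply (proj1 (proj2_sig g)). apply pv_U. apply pv_idem.
    - apply isbar_S0. }
  rewrite sv_right, tassoc, pv_left in B. destruct B as [e' [f' D]].
  destruct (dec_eq D) as [E1 [E2 E3]]. rewrite E1 in D. rewrite <- E1 in D at 1.
  pose proof (dec_spec (zv x y f g)) as D'. rewrite <- E1 in D'. exact D'. Qed.

Lemma range x y f g : inRc mulS mulL jL x f -> inLc mulS mulI jI y g ->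
  inLc mulS mulI jI (mulS x y) (alpha x y f g) /\ inRc mulS mulL jL (mulS x y) (beta x y f g).
Proof. intros Hf Hg. pose proof (decomp_zv Hf Hg) as D.
  destruct (decomp_unpack D) as [p [q [Hxb [He [Hf' [Ez [Hp [Hpp [Hpr [Hq [Hqq [Hql [E1 [E2 [E3 E4]]]]]]]]]]]]]]].
  assert (Ep : p = pv (mulS x y)) by (apply pv_uniq; auto).
  assert (Eq : q = sv (mulS x y)) by (apply sv_uniq; auto).
  subst p q. split; [apply inL_val|apply inR_val]; simpl; auto. Qed.

Lemma cond2 : W_cond2 mulS jI jL alpha beta.
Proof. intros x y.
  assert (Z : zv x y (jL (st x)) (jI (pl y)) = proj1_sig (mulS x y)).
  { unfold zv; simpl. rewrite sv_st, pv_pl, sv_right, tassoc, pv_left. reflexivity. }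
  split; apply sig_eq; simpl; rewrite Z.
  - rewrite eI_S0, pv_pl. reflexivity.
  - rewrite fL_S0, sv_st. reflexivity. Qed.

Lemma alpha_strip x y f g : mulI (jI (pl x)) (alpha x y f g) = alpha x y f g.
Proof. apply sig_eq; simpl. rewrite pv_pl.
  apply (Rstar_use1 (decomp_Rstar (dec_spec (zv x y f g))) I).
  unfold zv. rewrite <- !tassoc, pv_left. reflexivity. Qed.
Lemma beta_strip x y f g : mulL (beta x y f g) (jL (st y)) = beta x y f g.
Proof. apply sig_eq; simpl. rewrite sv_st.
  apply (Lstar_use1 (decomp_Lstar (dec_spec (zv x y f g))) I).
  unfold zv. rewrite tassoc, sv_right. reflexivity. Qed.

Local Notation WS := (Wset mulS mulI mulL jI jL).
Local Notation mW := (mulW mulS mulI mulL alpha beta).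

Definition phi (w : TI * S0 * TL) : T :=
  let '(e, x, f) := w in mul (mul (proj1_sig e) (proj1_sig x)) (proj1_sig f).

Lemma phi_mW a b : WS a -> WS b -> phi (mW a b) = mul (phi a) (phi b).
Proof. destruct a as [[e x] f], b as [[g y] h]. intros [He Hf] [Hg Hh].
  rewrite mW_eq. simpl. pose proof (decomp_zv Hf Hg) as D. destruct D as [_ [_ [_ [Ez _]]]].
  transitivity (mul (mul (proj1_sig e) (zv x y f g)) (proj1_sig h)).
  - remember (eI (zv x y f g)) as E0. remember (fL (zv x y f g)) as F0.
    rewrite Ez. rewrite !tassoc. reflexivity.
  - unfold zv. rewrite !tassoc. reflexivity. Qed.

Lemma phi_inj a b : WS a -> WS b -> phi a = phi b -> a = b.
Proof. destruct a as [[e x] f], b as [[g y] h]. intros [He Hf] [Hg Hh] E. simpl in E.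
  pose proof (decomp_W He Hf) as D1. pose proof (decomp_W Hg Hh) as D2. rewrite E in D1.
  destruct (decomp_unique D1 D2) as [E1 [E2 E3]].
  apply sig_eq in E1. apply sig_eq in E2. apply sig_eq in E3. subst; reflexivity. Qed.

Lemma WSc a b : WS a -> WS b -> WS (mW a b).
Proof. apply (WS_closed alpha beta S0_semigroup S0_adequate TI_LRB TL_RRB slI slL range). Qed.


Lemma WS_I e x f : inLc mulS mulI jI x e -> inRc mulS mulL jL x f -> WS (e, x, f).
Proof. intros; split; auto. Qed.

Lemma cond1 : W_cond1 mulS mulI mulL jI jL alpha beta.
Proof. intros x y z f g h k Hf Hg Hh Hk.
  assert (WA : WS (jI (pl x), x, f)).
  { split; auto. apply inL_val; simpl; rewrite pv_pl; split; apply pv_idem. }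
  assert (WB : WS (g, y, h)) by (split; auto).
  assert (WC : WS (k, z, jL (st z))).
  { split; auto. apply inR_val; simpl; rewrite sv_st; split; apply sv_idem. }
  assert (E : mW (mW (jI (pl x), x, f) (g, y, h)) (k, z, jL (st z)) =
              mW (jI (pl x), x, f) (mW (g, y, h) (k, z, jL (st z)))).
  { apply phi_inj; try (repeat apply WSc; auto).
    rewrite !phi_mW by (repeat apply WSc; auto). apply tassoc. }
  rewrite !mW_eq in E. apply triple_inj in E; destruct E as [C1 [C2 C3]].
  rewrite !alpha_strip in C1. rewrite !beta_strip in C3. split; [exact C1|symmetry; exact C3]. Qed.

Lemma cond3 : W_cond3 mulS mulI mulL jI jL alpha beta.
Proof. intros x x1 x2 e1 f1 e2 f2 e He1 Hf1 He2 Hf2 He Ea Eb Ec.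
  assert (Wb : WS (e, x, jL (st x))) by (split; auto; apply inR_val; simpl; rewrite sv_st; split; apply sv_idem).
  assert (Wbp : WS (e, pl x, jL (pl x))).
  { split; [|apply inR_jL]. apply inL_val. rewrite pv_pl. apply inL_val; auto. }
  assert (W1 : WS (e1, x1, f1)) by (split; auto). assert (W2 : WS (e2, x2, f2)) by (split; auto).
  assert (E : mW (e1, x1, f1) (e, x, jL (st x)) = mW (e2, x2, f2) (e, x, jL (st x))).
  { rewrite !mW_eq, Ea, Eb, Ec. reflexivity. }
  apply (f_equal phi) in E. rewrite !phi_mW in E by auto.
  pose proof (decomp_Rstar (decomp_W He (proj2 Wb))) as R.
  apply (Rstar_use2 R I I) in E.
  assert (Pb : phi (e, pl x, jL (pl x)) = proj1_sig e).
  { simpl. apply inL_val in He. assert (Hu : sv (pl x) = pv x).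
    { unfold sv, pv. rewrite (st_pl S0_semigroup S0_adequate). reflexivity. }
    change (proj1_sig (pl x)) with (pv x). rewrite Hu, (proj1 He), (proj1 He). reflexivity. }
  assert (E' : mW (e1, x1, f1) (e, pl x, jL (pl x)) = mW (e2, x2, f2) (e, pl x, jL (pl x))).
  { apply phi_inj; try apply WSc; auto. rewrite !phi_mW by auto. rewrite Pb. exact E. }
  rewrite !mW_eq in E'. apply triple_inj in E'; destruct E' as [F1 [F2 F3]].
  assert (Hj : jL (pl x) = jL (st (pl x))) by (rewrite (st_pl S0_semigroup S0_adequate); reflexivity).
  rewrite Hj, !beta_strip in F3. auto. Qed.

Lemma cond4 : W_cond4 mulS mulI mulL jI jL alpha beta.
Proof. intros x x1 x2 e1 f1 e2 f2 f He1 Hf1 He2 Hf2 Hf Ea Eb Ec.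
  assert (Wa : WS (jI (pl x), x, f)).
  { split; auto. apply inL_val; simpl; rewrite pv_pl; split; apply pv_idem. }
  assert (Was : WS (jI (st x), st x, f)).
  { split; [apply inL_jI|]. apply inR_val. rewrite sv_st. apply inR_val; auto. }
  assert (W1 : WS (e1, x1, f1)) by (split; auto). assert (W2 : WS (e2, x2, f2)) by (split; auto).
  assert (E : mW (jI (pl x), x, f) (e1, x1, f1) = mW (jI (pl x), x, f) (e2, x2, f2)).
  { rewrite !mW_eq, Ea, Eb, Ec. reflexivity. }
  apply (f_equal phi) in E. rewrite !phi_mW in E by auto.
  pose proof (decomp_Lstar (decomp_W (proj1 Wa) Hf)) as L.
  apply (Lstar_use2 L I I) in E.
  assert (Pa : phi (jI (st x), st x, f) = proj1_sig f).
  { simpl. apply inR_val in Hf. assert (Hu : pv (st x) = sv x).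
    { unfold sv, pv. rewrite (pl_st S0_semigroup S0_adequate). reflexivity. }
    rewrite Hu. change (proj1_sig (st x)) with (sv x). rewrite sv_idem, (proj1 Hf). reflexivity. }
  assert (E' : mW (jI (st x), st x, f) (e1, x1, f1) = mW (jI (st x), st x, f) (e2, x2, f2)).
  { apply phi_inj; try apply WSc; auto. rewrite !phi_mW by auto. rewrite Pa. exact E. }
  rewrite !mW_eq in E'. apply triple_inj in E'; destruct E' as [F1 [F2 F3]].
  assert (Hj : jI (st x) = jI (pl (st x))) by (rewrite (pl_st S0_semigroup S0_adequate); reflexivity).
  rewrite Hj, !alpha_strip in F1. auto. Qed.

Lemma W_data_B : W_data mulS mulI mulL jI jL alpha beta.
Proof. split; [exact S0_semigroup|]. split; [exact S0_adequate|]. split; [exact TI_LRB|].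
  split; [exact TL_RRB|]. split; [exact slI|]. split; [exact slL|]. split; [exact unionI|].
  split; [exact unionL|]. split; [exact range|]. split; [exact cond1|]. split; [exact cond2|].
  split; [exact cond3|exact cond4]. Qed.

Lemma W_iso_B : iso WS mW allT mul.
Proof. split; [split; [exact WSc|]|split; [exact Hsg|]].
  - intros a b c Ha Hb Hc. apply phi_inj; try (repeat apply WSc; auto).
    rewrite !phi_mW by (repeat apply WSc; auto). apply tassoc.
  - exists phi. split; [intros; exact I|]. split; [exact phi_inj|]. split; [|exact phi_mW].
    intros t _. pose proof (dec_spec t) as D.
    destruct (decomp_unpack D) as [p [q [Hxb [He [Hf [Ez [Hp [Hpp [Hpr [Hq [Hqq [Hql [E1 [E2 [E3 E4]]]]]]]]]]]]]]].
    exists (exist Ipred (eI t) (eI_Ipred t), exist U (bar t) Hxb, exist Lpred (fL t) (fL_Lpred t)).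
    split; [|simpl; symmetry; exact Ez].
    assert (Ep : p = pv (exist U (bar t) Hxb)) by (apply pv_uniq; auto).
    assert (Eq : q = sv (exist U (bar t) Hxb)) by (apply sv_uniq; auto).
    split; [apply inL_val|apply inR_val]; simpl; rewrite <- ?Ep, <- ?Eq; auto. Qed.

End B.

End Bm.
Import Bm.

Module PBm.
Set Implicit Arguments.

Lemma partB : forall (T : Type) (mul : T -> T -> T) (U : T -> Prop),
     is_semigroup allT mul -> admissible allT U mul ->
     exists (S0 : Type) (mulS : S0 -> S0 -> S0) (TI : Type) (mulI : TI -> TI -> TI)
            (TL : Type) (mulL : TL -> TL -> TL) (jI : S0 -> TI) (jL : S0 -> TL)
            (alpha : S0 -> S0 -> TL -> TI -> TI) (beta : S0 -> S0 -> TL -> TI -> TL),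
       W_data mulS mulI mulL jI jL alpha beta /\
       iso (Wset mulS mulI mulL jI jL) (mulW mulS mulI mulL alpha beta) allT mul.
Proof. intros T mul U Hsg Had.
  eexists _, _, _, _, _, _, _, _, _, _. split; [apply (W_data_B Hsg Had)|apply (W_iso_B Hsg Had)].
Qed.

End PBm.
Import PBm.

Theorem theorem2p16 :
  (forall (S0 : Type) (mulS : S0 -> S0 -> S0) (TI : Type) (mulI : TI -> TI -> TI)
          (TL : Type) (mulL : TL -> TL -> TL) (jI : S0 -> TI) (jL : S0 -> TL)
          (alpha : S0 -> S0 -> TL -> TI -> TI) (beta : S0 -> S0 -> TL -> TI -> TL),
     W_data mulS mulI mulL jI jL alpha beta ->
     is_semigroup (Wset mulS mulI mulL jI jL) (mulW mulS mulI mulL alpha beta) /\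
     quasi_adequate (Wset mulS mulI mulL jI jL) (mulW mulS mulI mulL alpha beta) /\
     exists U : TI * S0 * TL -> Prop,
       admissible (Wset mulS mulI mulL jI jL) U (mulW mulS mulI mulL alpha beta) /\
       iso U (mulW mulS mulI mulL alpha beta) allT mulS /\
       (W_cond5 mulS mulI mulL jI jL alpha beta ->
          iso (Iset (Wset mulS mulI mulL jI jL) U (mulW mulS mulI mulL alpha beta))
              (mulW mulS mulI mulL alpha beta) allT mulI /\
          iso (Lamset (Wset mulS mulI mulL jI jL) U (mulW mulS mulI mulL alpha beta))
              (mulW mulS mulI mulL alpha beta) allT mulL)) /\
  (forall (T : Type) (mul : T -> T -> T) (U : T -> Prop),
     is_semigroup allT mul -> admissible allT U mul ->
     exists (S0 : Type) (mulS : S0 -> S0 -> S0) (TI : Type) (mulI : TI -> TI -> TI)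
            (TL : Type) (mulL : TL -> TL -> TL) (jI : S0 -> TI) (jL : S0 -> TL)
            (alpha : S0 -> S0 -> TL -> TI -> TI) (beta : S0 -> S0 -> TL -> TI -> TL),
       W_data mulS mulI mulL jI jL alpha beta /\
       iso (Wset mulS mulI mulL jI jL) (mulW mulS mulI mulL alpha beta) allT mul).
Proof.
  split; [exact PAm.partA|exact PBm.partB].
Qed.
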